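(* Let $\mathfrak G=\{G^s:s>0\}$ with $G^s_k=(k!)^s$. Neither $\mathcal E^{(\mathfrak G)}(\mathbb R)$ nor $\mathcal E^{\{\mathfrak G\}}(\mathbb R)$ coincides (as a vector space) with any of $\mathcal E^{(M)}(\mathbb R)$, $\mathcal E^{\{M\}}(\mathbb R)$, $\mathcal E^{(\omega)}(\mathbb R)$, $\mathcal E^{\{\omega\}}(\mathbb R)$, for any sequence $M\in\mathbb R_{>0}^{\mathbb N}$ or any weight function $\omega\in\mathscr W$.
   Context: For $M\in\mathbb R_{>0}^{\mathbb N}$, compact $K\subseteq\mathbb R$, $\rho>0$: $\|f\|^M_{K,\rho}:=\sup\{|f^{(k)}(x)|/(k!\rho^kM_k):x\in K,k\in\mathbb N\}$; $\mathcal E^{(M)}(\mathbb R)$ = smooth $f$ with $\|f\|^M_{K,\rho}<\infty$ for all compact $K$, all $\rho>0$; $\mathcal E^{\{M\}}(\mathbb R)$ = smooth $f$ such that for every compact $K$ there is $\rho$ with $\|f\|^M_{K,\rho}<\infty$; $\mathcal E^{\{M\}}(K)$ = smooth functions on $K$ with some finite $\|f\|^M_{K,\rho}$. $\mathcal E^{(\mathfrak G)}(\mathbb R):=\bigcap_{s>0}\mathcal E^{(G^s)}(\mathbb R)$ and $\mathcal E^{\{\mathfrak G\}}(\mathbb R):=\bigcap_{K}\bigcup_{s>0}\mathcal E^{\{G^s\}}(K)$ (smooth $f$ whose restriction to each compact $K$ lies in some $\mathcal E^{\{G^s\}}(K)$). $\mathscr W$: continuous increasing $\omega:[0,\infty)\to[0,\infty)$,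 $\omega|_{[0,1]}=0$, $\omega\to\infty$, $\omega(2t)=O(\omega(t))$, $\log t=o(\omega(t))$, $t\mapsto\varphi(t):=\omega(e^t)$ convex on $[0,\infty)$; $\varphi^*(t):=\sup_{s\ge0}(st-\varphi(s))$. $\mathcal E^{(\omega)}(\mathbb R)$ / $\mathcal E^{\{\omega\}}(\mathbb R)$: smooth $f$ with $\sup_{x\in K,k}|f^{(k)}(x)|\exp(-\frac1\rho\varphi^*(\rho k))<\infty$ for all compact $K$ and all $\rho>0$ / for all $K$ and some $\rho>0$. *)

(* Defs.v *)
From Stdlib Require Import Reals Rtopology Factorial.
From Coquelicot Require Import Coquelicot.
Open Scope R_scope.

Definition smooth (f : R -> R) : Prop := forall (k : nat) (x : R), ex_derive_n f k x.

Definition cpt (K : R -> Prop) : Prop := compact K.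

Definition DCseminorm_finite (M : nat -> R) (K : R -> Prop) (rho : R) (f : R -> R) : Prop :=
  exists C : R, forall (x : R) (k : nat), K x ->
    Rabs (Derive_n f k x) <= C * (INR (fact k) * rho ^ k * M k).

Definition E_beur (M : nat -> R) (f : R -> R) : Prop :=
  smooth f /\ forall K, cpt K -> forall rho, 0 < rho -> DCseminorm_finite M K rho f.

Definition E_roum (M : nat -> R) (f : R -> R) : Prop :=
  smooth f /\ forall K, cpt K -> exists rho, 0 < rho /\ DCseminorm_finite M K rho f.

Definition Gev (s : R) : nat -> R := fun k => Rpower (INR (fact k)) s.

Definition E_G_beur (f : R -> R) : Prop :=
  forall s, 0 < s -> E_beur (Gev s) f.

(* E^{{G}}(R): smooth f such that for every compact K there are s>0, rho>0
   with ||f||^{G^s}_{K,rho} finite (restriction lies in some E^{{G^s}}(K)) *)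
Definition E_G_roum (f : R -> R) : Prop :=
  smooth f /\ forall K, cpt K -> exists s, 0 < s /\ exists rho, 0 < rho /\
    DCseminorm_finite (Gev s) K rho f.

Definition phi_of (om : R -> R) (t : R) : R := om (exp t).

Definition weight (om : R -> R) : Prop :=
  (forall t, 0 < t -> continuity_pt om t) /\
  (forall t, 0 <= t -> 0 <= om t) /\
  (forall s t, 0 <= s -> s <= t -> om s <= om t) /\
  (forall t, 0 <= t -> t <= 1 -> om t = 0) /\
  (forall A, exists T, forall t, T <= t -> A <= om t) /\
  (exists C T, forall t, T <= t -> om (2 * t) <= C * om t) /\
  (forall eps, 0 < eps -> exists T, forall t, T <= t -> Rabs (ln t) <= eps * om t) /\
  (forall s1 s2 l, 0 <= s1 -> 0 <= s2 -> 0 <= l -> l <= 1 ->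
     phi_of om (l * s1 + (1 - l) * s2) <= l * phi_of om s1 + (1 - l) * phi_of om s2).

(* Young conjugate phi*(t) = sup_{s>=0} (s t - phi(s)) (finite for weights, t >= 0) *)
Definition phi_star (om : R -> R) (t : R) : R :=
  real (Lub_Rbar (fun y => exists s, 0 <= s /\ y = s * t - phi_of om s)).

Definition om_bounded (om : R -> R) (K : R -> Prop) (rho : R) (f : R -> R) : Prop :=
  exists C : R, forall (x : R) (k : nat), K x ->
    Rabs (Derive_n f k x) * exp (- (/ rho) * phi_star om (rho * INR k)) <= C.

Definition E_om_beur (om : R -> R) (f : R -> R) : Prop :=
  smooth f /\ forall K, cpt K -> forall rho, 0 < rho -> om_bounded om K rho f.

Definition E_om_roum (om : R -> R) (f : R -> R) : Prop :=
  smooth f /\ forall K, cpt K -> exists rho, 0 < rho /\ om_bounded om K rho f.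

Definition same_space (P Q : (R -> R) -> Prop) : Prop := forall f, P f <-> Q f.

(* Main.v *)
Require Import Defs.
From Stdlib Require Import Reals Lra Lia Rtopology Factorial ClassicalEpsilon Classical.
From Coquelicot Require Import Coquelicot.
Open Scope R_scope.

Lemma my_choice {A B : Type} (P : A -> B -> Prop) :
  (forall a, exists b, P a b) -> exists f : A -> B, forall a, P a (f a).
Proof.
  intros H. exists (fun a => proj1_sig (constructive_indefinite_description _ (H a))).
  intros a. exact (proj2_sig (constructive_indefinite_description _ (H a))).
Qed.

Lemma Series_zero : Series (fun _ => 0) = 0.
Proof.
  rewrite (Series_ext (fun _ => 0) (fun n => 0 * 0)).
  - rewrite Series_scal_l. ring.
  - intros; ring.
Qed.

Lemma Series_nonneg (a : nat -> R) : ex_series a -> (forall n, 0 <= a n) -> 0 <= Series a.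
Proof.
  intros Ha Hp. rewrite <- Series_zero. apply Series_le; auto.
  intros n; split; [lra| apply Hp].
Qed.

Lemma sum_f_R0_ge_term (a : nat -> R) k : (forall n, 0 <= a n) -> a k <= sum_f_R0 a k.
Proof.
  intros Hp. destruct k; simpl. lra. 
  assert (0 <= sum_f_R0 a k). { apply cond_pos_sum; auto. } lra.
Qed.

Lemma Series_ge_term (a : nat -> R) k : ex_series a -> (forall n, 0 <= a n) -> a k <= Series a.
Proof.
  intros Ha Hp. rewrite (Series_incr_n a (S k)); [|lia|auto]. simpl pred.
  assert (0 <= Series (fun j => a (S k + j)%nat)).
  { apply Series_nonneg. apply ex_series_incr_n; auto. intros; apply Hp. }
  pose proof (sum_f_R0_ge_term a k Hp). lra.
Qed.

Lemma ex_series_Rscal (c : R) (a : nat -> R) : ex_series a -> ex_series (fun n => c * a n).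
Proof. intros H. apply (ex_series_scal_l c a) in H. exact H. Qed.

Lemma ex_series_half : ex_series (fun n => (/2)^(S n)).
Proof.
  apply (ex_series_ext (fun n => /2 * (/2)^n)). intros; simpl; ring.
  apply ex_series_Rscal. apply ex_series_geom. rewrite Rabs_pos_eq; lra.
Qed.

Lemma Series_le_const (a : nat -> R) (c : R) :
  (forall n, 0 <= a n <= c * (/2)^(S n)) -> Series a <= c.
Proof.
  intros H.
  assert (Hg : ex_series (fun n => c * (/2)^(S n))).
  { apply ex_series_Rscal. apply ex_series_half. }
  apply Rle_trans with (Series (fun n => c * (/2)^(S n))).
  { apply Series_le; auto. }
  rewrite Series_scal_l. 
  rewrite (Series_ext _ (fun n => /2 * (/2)^n)) by (intros; simpl; ring).
  rewrite Series_scal_l, Series_geom by (rewrite Rabs_pos_eq; lra).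
  assert (0 <= c). { specialize (H O). simpl in H. lra. }
  replace (/2 * /(1 - /2)) with 1 by field. lra.
Qed.

Lemma ex_series_dom (a : nat -> R) (c : R) :
  (forall n, 0 <= a n <= c * (/2)^(S n)) -> ex_series a.
Proof.
  intros H. apply (ex_series_le a (fun n => c * (/2)^(S n))).
  - intros n. change (Rabs (a n) <= c * (/2)^(S n)). rewrite Rabs_pos_eq; apply H.
  - apply ex_series_Rscal. apply ex_series_half.
Qed.

Lemma ex_series_Rle (a b : nat -> R) : (forall n, Rabs (a n) <= b n) -> ex_series b -> ex_series a.
Proof.
  intros H Hb. apply (ex_series_le a b); auto.
Qed.

Lemma Un_cv_Series (a : nat -> R) : ex_series a -> Un_cv (fun n => sum_f_R0 a n) (Series a).
Proof.
  intros H. apply Series_correct in H. apply is_series_Reals in H. exact H.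
Qed.

Lemma series_deriv (u u' : nat -> R -> R) (a b : nat -> R) :
  (forall n x, is_derive (u n) x (u' n x)) ->
  (forall n x, Rabs (u n x) <= a n) -> (forall n x, Rabs (u' n x) <= b n) ->
  ex_series a -> ex_series b ->
  forall x, is_derive (fun y => Series (fun n => u n y)) x (Series (fun n => u' n x)).
Proof.
  intros Hd Ha Hb Sa Sb x.
  assert (Hrp : 0 < Rabs x + 1) by (pose proof (Rabs_pos x); lra).
  set (r := mkposreal _ Hrp).
  assert (Hb0 : forall n, 0 <= b n).
  { intros n. eapply Rle_trans. apply Rabs_pos. apply (Hb n 0). }
  assert (CV : CVN_r u' r).
  { exists b. exists (Series b). split.
    - apply (Un_cv_ext (fun n => sum_f_R0 b n)).
      + intros n. apply sum_eq. intros i _. rewrite Rabs_pos_eq; auto.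
      + apply Un_cv_Series; auto.
    - intros n y _. apply Hb. }
  destruct (CVN_CVU_r u' r CV x) as [e He].
  { simpl. lra. }
  apply is_derive_Reals.
  apply (CVU_derivable (SP u) (SP u') _ _ x e He).
  - intros y _. unfold SP. apply Un_cv_Series.
    apply (ex_series_Rle _ a); auto.
  - intros n y _. apply is_derive_Reals. unfold SP.
    induction n as [|n IH]; simpl.
    + apply Hd.
    + apply (is_derive_plus (fun y => sum_f_R0 (fun k => u k y) n) (u (S n))); auto.
  - unfold Boule. rewrite Rminus_diag, Rabs_R0. apply cond_pos.
Qed.

Fixpoint cs (k : nat) (y : R) : R :=
  match k with
  | O => cos y + sin y
  | S O => cos y - sin y
  | S (S k') => - cs k' y
  end.

Lemma cs_deriv_aux k : (forall y, is_derive (cs k) y (cs (S k) y)) /\ (forall y, is_derive (cs (S k)) y (cs (S (S k)) y)).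
Proof.
  induction k as [|k [IH1 IH2]].
  - split; intros y; simpl.
    + assert (E : is_derive (fun y => cos y + sin y) y (cos y - sin y)) by (auto_derive; auto; ring).
      exact E.
    + assert (E : is_derive (fun y => cos y - sin y) y (- (cos y + sin y))) by (auto_derive; auto; ring).
      exact E.
  - split; auto. intros y. simpl cs at 1. 
    change (cs (S (S (S k))) y) with (- cs (S k) y).
    apply (is_derive_opp (cs k)). apply IH1.
Qed.

Lemma cs_deriv k y : is_derive (cs k) y (cs (S k) y).
Proof. apply cs_deriv_aux. Qed.

Lemma cs_aux k : (forall y, Rabs (cs k y) <= 2 /\ Rabs (cs (S k) y) <= 2) /\ (Rabs (cs k 0) = 1 /\ Rabs (cs (S k) 0) = 1).
Proof.
  induction k as [|k [IH1 IH2]].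
  - split. intros y; simpl; split.
    + pose proof (COS_bound y); pose proof (SIN_bound y). unfold Rabs; destruct Rcase_abs; lra.
    + pose proof (COS_bound y); pose proof (SIN_bound y). unfold Rabs; destruct Rcase_abs; lra.
    + simpl. rewrite cos_0, sin_0. split; rewrite Rabs_pos_eq; lra.
  - split. intros y. split. apply IH1. simpl cs. rewrite Rabs_Ropp. apply IH1.
    split. apply IH2. simpl cs. rewrite Rabs_Ropp. apply IH2.
Qed.

Lemma cs_bound k y : Rabs (cs k y) <= 2.
Proof. apply cs_aux. Qed.
Lemma cs_0 k : Rabs (cs k 0) = 1.
Proof. apply cs_aux. Qed.

Definition TPF (V : nat -> R) (F : nat -> R -> R) : Prop :=
  (forall k x, is_derive (F k) x (F (S k) x)) /\
  (forall k x, Rabs (F k x) <= 2 * V k) /\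
  (forall k, F k 0 = cs k 0 * V k).

Definition TP (V : nat -> R) : Prop := exists F, TPF V F.

Lemma TPF_nonneg V F : TPF V F -> forall k, 0 <= V k.
Proof.
  intros [_ [H1 H2]] k. specialize (H1 k 0). rewrite H2, Rabs_mult, cs_0 in H1.
  pose proof (Rabs_pos (V k)). unfold Rabs in *. destruct Rcase_abs; lra.
Qed.

Lemma TP_nonneg V : TP V -> forall k, 0 <= V k.
Proof. intros [F H]. apply (TPF_nonneg V F H). Qed.

Lemma TP_geo (l : R) : 0 <= l -> TP (fun k => l ^ k).
Proof.
  intros Hl. exists (fun k x => l ^ k * cs k (l * x)). split; [|split].
  - intros k x. 
    replace (l ^ S k * cs (S k) (l * x)) with (l ^ k * (l * cs (S k) (l * x))) by (simpl; ring).
    apply (is_derive_scal (fun x => cs k (l * x))).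
    apply (is_derive_comp (cs k) (fun x => l * x)). apply cs_deriv.
    auto_derive; auto; ring.
  - intros k x. rewrite Rabs_mult, Rabs_pos_eq by (apply pow_le; auto).
    pose proof (cs_bound k (l*x)). pose proof (pow_le l k Hl). nra.
  - intros k. rewrite Rmult_0_r. ring.
Qed.

Lemma TP_scal (c : R) V : 0 <= c -> TP V -> TP (fun k => c * V k).
Proof.
  intros Hc [F [H1 [H2 H3]]]. exists (fun k x => c * F k x). split; [|split].
  - intros k x. apply (is_derive_scal (F k)). apply H1.
  - intros k x. rewrite Rabs_mult, Rabs_pos_eq by auto. specialize (H2 k x). nra.
  - intros k. rewrite H3. ring.
Qed.

Lemma TP_sum (V : nat -> nat -> R) :
  (forall n, TP (V n)) -> (forall k, ex_series (fun n => V n k)) ->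
  TP (fun k => Series (fun n => V n k)).
Proof.
  intros HT HS.
  destruct (my_choice _ HT) as [F HF].
  exists (fun k x => Series (fun n => F n k x)). split; [|split].
  - intros k x. apply (series_deriv (fun n => F n k) (fun n => F n (S k)) (fun n => 2 * V n k) (fun n => 2 * V n (S k))).
    + intros n y. apply (HF n).
    + intros n y. apply (HF n).
    + intros n y. apply (HF n).
    + apply ex_series_Rscal; auto.
    + apply ex_series_Rscal; auto.
  - intros k x.
    assert (E : ex_series (fun n => Rabs (F n k x))).
    { apply (ex_series_Rle _ (fun n => 2 * V n k)). intros n. rewrite Rabs_Rabsolu. apply (HF n).
      apply ex_series_Rscal; auto. }
    eapply Rle_trans. apply Series_Rabs; auto.
    rewrite <- Series_scal_l. apply Series_le. intros n. split. apply Rabs_pos. apply (HF n).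
    apply ex_series_Rscal; auto.
  - intros k. rewrite <- Series_scal_l. apply Series_ext. intros n. apply (HF n).
Qed.

Lemma TPF_Derive_n V F : TPF V F -> forall k x, Derive_n (F 0%nat) k x = F k x.
Proof.
  intros [H1 _] k. induction k as [|k IH]; intros x; simpl; auto.
  rewrite (Derive_ext _ (F k)) by auto. apply is_derive_unique. apply H1.
Qed.

Lemma TPF_smooth V F : TPF V F -> smooth (F 0%nat).
Proof.
  intros H k x. destruct k; simpl; auto.
  apply (ex_derive_ext (F k)). intros t. symmetry. apply (TPF_Derive_n V F H).
  exists (F (S k) x). apply H.
Qed.

Fixpoint Tprod (mu : nat -> R) (k : nat) : R :=
  match k with O => 1 | S k' => Tprod mu k' * mu k' end.

Section LC.
Variable mu : nat -> R.
Hypothesis mu_pos : forall i, 0 < mu i.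
Hypothesis mu_mono : forall i, mu i <= mu (S i).

Lemma mu_le a b : (a <= b)%nat -> mu a <= mu b.
Proof.
  induction 1. lra. eapply Rle_trans; eauto.
Qed.

Lemma Tprod_pos k : 0 < Tprod mu k.
Proof. induction k; simpl. lra. apply Rmult_lt_0_compat; auto. Qed.

Lemma Tprod_up j d : Tprod mu j * mu j ^ d <= Tprod mu (j + d).
Proof.
  induction d. rewrite Nat.add_0_r; simpl; lra.
  rewrite Nat.add_succ_r. simpl.
  assert (mu j <= mu (j + d)%nat) by (apply mu_le; lia).
  pose proof (Tprod_pos j). pose proof (pow_lt _ d (mu_pos j)).
  apply Rle_trans with (Tprod mu (j + d) * mu j).
  - replace (Tprod mu j * (mu j * mu j ^ d)) with (Tprod mu j * mu j ^ d * mu j) by ring.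
    apply Rmult_le_compat_r; auto. left; auto.
  - apply Rmult_le_compat_l; auto. left; apply Tprod_pos.
Qed.

Lemma Tprod_down k d : Tprod mu (k + d) <= Tprod mu k * mu (k + d)%nat ^ d.
Proof.
  induction d. rewrite Nat.add_0_r; simpl; lra.
  rewrite Nat.add_succ_r. simpl.
  assert (mu (k + d)%nat <= mu (S (k + d))) by apply mu_mono.
  assert (H1 : mu (k + d)%nat ^ d <= mu (S (k + d)) ^ d).
  { apply pow_incr. split; auto. left; auto. }
  pose proof (Tprod_pos k). pose proof (Tprod_pos (k+d)). pose proof (mu_pos (k+d)).
  pose proof (pow_lt _ d (mu_pos (k+d))).
  assert (A : Tprod mu (k + d) <= Tprod mu k * mu (S (k + d)) ^ d).
  { eapply Rle_trans; [apply IHd| apply Rmult_le_compat_l; lra]. }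
  replace (Tprod mu k * (mu (S (k + d)) * mu (S (k + d)) ^ d)) with (Tprod mu k * mu (S (k + d)) ^ d * mu (S (k+d))) by ring.
  apply Rmult_le_compat; lra.
Qed.

Lemma Tprod_key j k : Tprod mu j * mu j ^ k <= Tprod mu k * mu j ^ j.
Proof.
  destruct (Compare_dec.le_lt_dec j k) as [H|H].
  - destruct (Nat.le_exists_sub j k H) as [d [-> _]].
    rewrite Nat.add_comm. rewrite pow_add. pose proof (Tprod_up j d). pose proof (pow_lt _ j (mu_pos j)).
    replace (Tprod mu j * (mu j ^ j * mu j ^ d)) with (Tprod mu j * mu j ^ d * mu j ^ j) by ring.
    apply Rmult_le_compat_r; lra.
  - destruct (Nat.le_exists_sub k j ltac:(lia)) as [d [-> _]].
    rewrite Nat.add_comm. pose proof (Tprod_down k d).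
    rewrite pow_add. pose proof (pow_lt _ k (mu_pos (k + d))).
    replace (Tprod mu k * (mu (k + d)%nat ^ k * mu (k + d)%nat ^ d)) with (Tprod mu k * mu (k + d)%nat ^ d * mu (k + d)%nat ^ k) by ring.
    apply Rmult_le_compat_r; lra.
Qed.

Lemma TP_lc : exists V, TP V /\ forall k, (/2)^(S k) * Tprod mu k <= V k <= Tprod mu k.
Proof.
  set (c := fun j => (/2)^(S j) * (Tprod mu j / mu j ^ j)).
  assert (Hc : forall j, 0 <= c j).
  { intros j. unfold c. apply Rmult_le_pos. apply pow_le; lra.
    apply Rlt_le, Rdiv_lt_0_compat. apply Tprod_pos. apply pow_lt, mu_pos. }
  assert (Hterm : forall j k, 0 <= c j * mu j ^ k <= (Tprod mu k) * (/2)^(S j)).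
  { intros j k. split. apply Rmult_le_pos; auto. apply pow_le; left; auto.
    unfold c. pose proof (Tprod_key j k). pose proof (pow_lt _ j (mu_pos j)).
    pose proof (pow_lt (/2) (S j) ltac:(lra)).
    assert (E : (/ 2) ^ S j * (Tprod mu j / mu j ^ j) * mu j ^ k = ((/2)^(S j) * (Tprod mu j * mu j ^ k)) / mu j ^ j).
    { field. apply pow_nonzero. apply Rgt_not_eq, mu_pos. }
    rewrite E. unfold Rdiv. apply Rmult_le_reg_r with (mu j ^ j); auto.
    rewrite Rmult_assoc, Rinv_l, Rmult_1_r by (apply pow_nonzero; apply Rgt_not_eq, mu_pos).
    nra. }
  exists (fun k => Series (fun j => c j * mu j ^ k)). split.
  - apply TP_sum.
    + intros n. apply TP_scal; auto. apply TP_geo. left; apply mu_pos.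
    + intros k. apply (ex_series_dom _ (Tprod mu k)). intros n; apply Hterm.
  - intros k. split.
    + apply Rle_trans with (c k * mu k ^ k).
      * unfold c. right. field. apply pow_nonzero. apply Rgt_not_eq, mu_pos.
      * apply (Series_ge_term (fun j => c j * mu j ^ k)).
        apply (ex_series_dom _ (Tprod mu k)). intros n; apply Hterm.
        intros n; apply Hterm.
    + apply Series_le_const. intros n. apply Hterm.
Qed.
End LC.

Definition SMb (M : nat -> R) (V : nat -> R) : Prop :=
  forall rho, 0 < rho -> exists C, forall k, V k <= C * (INR (fact k) * rho ^ k * M k).
Definition SMr (M : nat -> R) (V : nat -> R) : Prop :=
  exists rho, 0 < rho /\ exists C, forall k, V k <= C * (INR (fact k) * rho ^ k * M k).
Definition SGb (V : nat -> R) : Prop := forall s, 0 < s -> SMb (Gev s) V.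
Definition SGr (V : nat -> R) : Prop := exists s, 0 < s /\ SMr (Gev s) V.
Definition SOb (om : R -> R) (V : nat -> R) : Prop :=
  forall rho, 0 < rho -> exists C, forall k, V k * exp (- (/ rho) * phi_star om (rho * INR k)) <= C.
Definition SOr (om : R -> R) (V : nat -> R) : Prop :=
  exists rho, 0 < rho /\ exists C, forall k, V k * exp (- (/ rho) * phi_star om (rho * INR k)) <= C.

Definition K0 (x : R) : Prop := 0 <= x <= 0.
Lemma K0_cpt : cpt K0.
Proof. apply compact_P3. Qed.
Lemma K0_0 : K0 0.
Proof. unfold K0; lra. Qed.

Section Tr.
Variables (V : nat -> R) (F : nat -> R -> R).
Hypothesis HF : TPF V F.

Lemma absD0 k : Rabs (Derive_n (F 0%nat) k 0) = V k.
Proof.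
  rewrite (TPF_Derive_n V F HF). destruct HF as [_ [_ H]]. rewrite H, Rabs_mult, cs_0.
  rewrite Rabs_pos_eq. ring. apply (TPF_nonneg V F HF).
Qed.

Lemma absDx k x : Rabs (Derive_n (F 0%nat) k x) <= 2 * V k.
Proof. rewrite (TPF_Derive_n V F HF). apply HF. Qed.

Lemma DC_of_seq M K rho C : (forall k, V k <= C * (INR (fact k) * rho ^ k * M k)) ->
  DCseminorm_finite M K rho (F 0%nat).
Proof.
  intros H. exists (2 * C). intros x k _. eapply Rle_trans. apply absDx.
  rewrite Rmult_assoc. apply Rmult_le_compat_l; [lra| apply H].
Qed.

Lemma seq_of_DC M rho : DCseminorm_finite M K0 rho (F 0%nat) ->
  exists C, forall k, V k <= C * (INR (fact k) * rho ^ k * M k).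
Proof.
  intros [C H]. exists C. intros k. rewrite <- absD0. apply H. apply K0_0.
Qed.

Lemma om_of_seq om K rho C : (forall k, V k * exp (- (/ rho) * phi_star om (rho * INR k)) <= C) ->
  om_bounded om K rho (F 0%nat).
Proof.
  intros H. exists (2 * C). intros x k _.
  apply Rle_trans with (2 * V k * exp (- / rho * phi_star om (rho * INR k))).
  apply Rmult_le_compat_r. left; apply exp_pos. apply absDx.
  rewrite Rmult_assoc. apply Rmult_le_compat_l; [lra| apply H].
Qed.

Lemma seq_of_om om rho : om_bounded om K0 rho (F 0%nat) ->
  exists C, forall k, V k * exp (- (/ rho) * phi_star om (rho * INR k)) <= C.
Proof.
  intros [C H]. exists C. intros k. rewrite <- absD0. apply H. apply K0_0.
Qed.

Lemma cls_Mb M : SMb M V <-> E_beur M (F 0%nat).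
Proof.
  split.
  - intros H. split. apply (TPF_smooth V F HF). intros K _ rho Hr.
    destruct (H rho Hr) as [C HC]. apply (DC_of_seq M K rho C HC).
  - intros [_ H] rho Hr. apply seq_of_DC. apply H; auto. apply K0_cpt.
Qed.

Lemma cls_Mr M : SMr M V <-> E_roum M (F 0%nat).
Proof.
  split.
  - intros [rho [Hr [C HC]]]. split. apply (TPF_smooth V F HF). intros K _.
    exists rho. split; auto. apply (DC_of_seq M K rho C HC).
  - intros [_ H]. destruct (H K0 K0_cpt) as [rho [Hr HD]]. exists rho; split; auto.
    apply seq_of_DC; auto.
Qed.

Lemma cls_Gb : SGb V <-> E_G_beur (F 0%nat).
Proof.
  split.
  - intros H s Hs. apply cls_Mb. apply H; auto.
  - intros H s Hs. apply cls_Mb. apply H; auto.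
Qed.

Lemma cls_Gr : SGr V <-> E_G_roum (F 0%nat).
Proof.
  split.
  - intros [s [Hs [rho [Hr [C HC]]]]]. split. apply (TPF_smooth V F HF). intros K _.
    exists s. split; auto. exists rho. split; auto. apply (DC_of_seq _ K rho C HC).
  - intros [_ H]. destruct (H K0 K0_cpt) as [s [Hs [rho [Hr HD]]]]. exists s; split; auto.
    exists rho; split; auto. apply seq_of_DC; auto.
Qed.

Lemma cls_Ob om : SOb om V <-> E_om_beur om (F 0%nat).
Proof.
  split.
  - intros H. split. apply (TPF_smooth V F HF). intros K _ rho Hr.
    destruct (H rho Hr) as [C HC]. apply (om_of_seq om K rho C HC).
  - intros [_ H] rho Hr. apply seq_of_om. apply H; auto. apply K0_cpt.
Qed.

Lemma cls_Or om : SOr om V <-> E_om_roum om (F 0%nat).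
Proof.
  split.
  - intros [rho [Hr [C HC]]]. split. apply (TPF_smooth V F HF). intros K _.
    exists rho. split; auto. apply (om_of_seq om K rho C HC).
  - intros [_ H]. destruct (H K0 K0_cpt) as [rho [Hr HD]]. exists rho; split; auto.
    apply seq_of_om; auto.
Qed.
End Tr.

Lemma transfer (P1 P2 : (R -> R) -> Prop) (S1 S2 : (nat -> R) -> Prop) :
  (forall V F, TPF V F -> (S1 V <-> P1 (F 0%nat))) ->
  (forall V F, TPF V F -> (S2 V <-> P2 (F 0%nat))) ->
  same_space P1 P2 -> forall V, TP V -> (S1 V <-> S2 V).
Proof.
  intros H1 H2 Hs V [F HF]. rewrite (H1 V F HF), (H2 V F HF). apply Hs.
Qed.

Lemma fact_pos k : 0 < INR (fact k).
Proof. apply INR_fact_lt_0. Qed.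
Lemma fact_ge1 k : 1 <= INR (fact k).
Proof. pose proof (lt_O_fact k). apply (le_INR 1). lia. Qed.

Lemma ev_bound (u : nat -> R) (N : nat) (B : R) :
  (forall n, (N <= n)%nat -> u n <= B) -> exists C, forall n, u n <= C.
Proof.
  revert B. induction N as [|N IH]; intros B H.
  - exists B. intros n; apply H; lia.
  - destruct (IH (Rmax B (u N))) as [C HC].
    + intros n Hn. destruct (Nat.eq_dec n N) as [->|Hne].
      apply Rmax_r. eapply Rle_trans. apply H; lia. apply Rmax_l.
    + exists C; auto.
Qed.

Lemma FB (A : R) : exists C, 0 < C /\ forall k, A ^ k <= C * INR (fact k).
Proof.
  pose proof (cv_speed_pow_fact (Rabs A)) as Hc.
  destruct (Hc 1 ltac:(lra)) as [N HN].
  destruct (ev_bound (fun k => Rabs A ^ k / INR (fact k)) N 1) as [C HC].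
  { intros n Hn. specialize (HN n Hn). unfold Rdist in HN. rewrite Rminus_0_r in HN.
    pose proof (Rle_abs (Rabs A ^ n / INR (fact n))). lra. }
  exists (Rmax C 1). split. apply Rlt_le_trans with 1; [lra| apply Rmax_r].
  intros k. eapply Rle_trans. apply Rle_abs. rewrite <- RPow_abs.
  specialize (HC k). pose proof (fact_pos k).
  apply Rle_trans with (C * INR (fact k)).
  - apply (Rmult_le_compat_r (INR (fact k))) in HC; [|lra].
    unfold Rdiv in HC. rewrite Rmult_assoc, Rinv_l, Rmult_1_r in HC; lra.
  - apply Rmult_le_compat_r; [lra| apply Rmax_l].
Qed.

Lemma pow2_ge k : INR k < 2 ^ k.
Proof.
  induction k. simpl; lra. rewrite S_INR. simpl.
  pose proof (pow_le 2 k ltac:(lra)). assert (1 <= 2 ^ k) by (apply pow_R1_Rle; lra). lra.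
Qed.

Lemma pow2_unb C : exists k, C < 2 ^ k.
Proof.
  destruct (INR_archimed 1 C ltac:(lra)) as [n Hn]. exists n. pose proof (pow2_ge n). lra.
Qed.

Lemma fact_beats (A C : R) : 0 <= A -> exists k, C * A ^ k < INR (fact k).
Proof.
  intros HA. destruct (FB (2 * A)) as [C0 [HC0 H0]].
  destruct (pow2_unb (Rabs C * C0)) as [k Hk]. exists k.
  specialize (H0 k). rewrite Rpow_mult_distr in H0.
  pose proof (pow_lt 2 k ltac:(lra)). pose proof (pow_le A k HA). pose proof (fact_pos k).
  apply Rle_lt_trans with (Rabs C * A ^ k).
  apply Rmult_le_compat_r; auto. apply Rle_abs.
  apply Rmult_lt_reg_l with (2 ^ k); auto.
  apply Rle_lt_trans with (Rabs C * (2 ^ k * A ^ k)). right; ring.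
  apply Rle_lt_trans with (Rabs C * (C0 * INR (fact k))).
  apply Rmult_le_compat_l; auto. apply Rabs_pos.
  pose proof (Rabs_pos C). 
  replace (Rabs C * (C0 * INR (fact k))) with ((Rabs C * C0) * INR (fact k)) by ring.
  apply Rmult_lt_compat_r; auto.
Qed.

Lemma Rpower_pos x y : 0 < Rpower x y.
Proof. unfold Rpower. apply exp_pos. Qed.

Lemma Rpower_ge1 x y : 1 <= x -> 0 <= y -> 1 <= Rpower x y.
Proof.
  intros Hx Hy. rewrite <- (Rpower_O x) by lra. apply Rle_Rpower; auto.
Qed.

Lemma FBeps (eps A : R) : 0 < eps -> exists C, 0 < C /\ forall k, A ^ k <= C * Rpower (INR (fact k)) eps.
Proof.
  intros He.
  destruct (INR_archimed eps 1 He) as [m Hm].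
  assert (Hm0 : (0 < m)%nat). { destruct m. simpl in Hm. lra. lia. }
  assert (HmR : 0 < INR m) by (apply lt_0_INR; auto).
  destruct (FB (Rabs A ^ m)) as [C1 [HC1 H1]].
  set (C0 := Rmax C1 1). assert (HC0 : 1 <= C0) by apply Rmax_r.
  assert (H0 : forall k, (Rabs A ^ m) ^ k <= C0 * INR (fact k)).
  { intros k. eapply Rle_trans. apply H1. apply Rmult_le_compat_r. left; apply fact_pos. apply Rmax_l. }
  exists (Rpower C0 (/ INR m)). split. apply Rpower_pos.
  intros k. eapply Rle_trans. apply Rle_abs. rewrite <- RPow_abs.
  destruct (Req_dec (Rabs A) 0) as [HA|HA].
  { rewrite HA. destruct k. rewrite pow_O.
    - pose proof (Rpower_ge1 C0 (/ INR m) HC0 ltac:(left; apply Rinv_0_lt_compat; auto)).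
      pose proof (Rpower_ge1 (INR (fact 0)) eps (fact_ge1 0) ltac:(lra)). nra.
    - rewrite pow_ne_zero by lia. apply Rmult_le_pos; left; apply Rpower_pos. }
  assert (HAp : 0 < Rabs A). { pose proof (Rabs_pos A). lra. }
  assert (E : Rabs A ^ k = Rpower ((Rabs A ^ k) ^ m) (/ INR m)).
  { rewrite <- (Rpower_pow m (Rabs A ^ k)) by (apply pow_lt; auto). rewrite Rpower_mult.
    rewrite Rinv_r by lra. rewrite Rpower_1; auto. apply pow_lt; auto. }
  rewrite E. rewrite <- pow_mult, Nat.mul_comm, pow_mult.
  apply Rle_trans with (Rpower (C0 * INR (fact k)) (/ INR m)).
  - apply Rle_Rpower_l. left; apply Rinv_0_lt_compat; auto. split. apply pow_lt, pow_lt; auto. apply H0.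
  - rewrite <- Rpower_mult_distr; [|lra| apply fact_pos].
    apply Rmult_le_compat_l. left; apply Rpower_pos.
    apply Rle_Rpower. apply fact_ge1.
    apply Rmult_le_reg_l with (INR m); auto. rewrite Rinv_r by lra. lra.
Qed.

Definition muF (c b : R) (i : nat) : R := c * Rpower (INR (S i)) b.
Definition muG (c b : R) (K : nat) (i : nat) : R := c * Rpower (INR (S (Nat.min i K))) b.

Lemma Tprod_pos_gen mu k : (forall i, 0 < mu i) -> 0 < Tprod mu k.
Proof. intros H; induction k; simpl. lra. apply Rmult_lt_0_compat; auto. Qed.

Lemma Tprod_mono mu nu k : (forall i, 0 < mu i) -> (forall i, mu i <= nu i) -> Tprod mu k <= Tprod nu k.
Proof.
  intros H1 H2. induction k; simpl. lra.
  pose proof (Tprod_pos_gen mu k H1). apply Rmult_le_compat; auto; left; auto.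
Qed.

Lemma Rpower_INR_pos n b : 0 < Rpower (INR (S n)) b.
Proof. apply Rpower_pos. Qed.

Lemma Rpower_base1 b : Rpower 1 b = 1.
Proof. unfold Rpower. rewrite ln_1, Rmult_0_r, exp_0. reflexivity. Qed.

Lemma Tprod_muF c b k : 0 < c -> Tprod (muF c b) k = c ^ k * Rpower (INR (fact k)) b.
Proof.
  intros Hc. induction k; simpl Tprod.
  - simpl. rewrite Rpower_base1. ring.
  - rewrite IHk. unfold muF. rewrite fact_simpl, mult_INR.
    rewrite <- (Rpower_mult_distr (INR (S k)) (INR (fact k))) by (first [apply fact_pos | apply lt_0_INR; lia]).
    simpl. ring.
Qed.

Lemma Tprod_muG_eq c b K k : 0 < c -> (k <= S K)%nat -> Tprod (muG c b K) k = c ^ k * Rpower (INR (fact k)) b.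
Proof.
  intros Hc. induction k; intros Hk; simpl Tprod.
  - simpl. rewrite Rpower_base1. ring.
  - rewrite IHk by lia. unfold muG. rewrite Nat.min_l by lia. rewrite fact_simpl, mult_INR.
    rewrite <- (Rpower_mult_distr (INR (S k)) (INR (fact k))) by (first [apply fact_pos | apply lt_0_INR; lia]).
    simpl. ring.
Qed.

Lemma Tprod_muG_le c b K k : 0 < c -> 0 <= b -> Tprod (muG c b K) k <= (c * Rpower (INR (S K)) b) ^ k.
Proof.
  intros Hc Hb. induction k; simpl. lra.
  assert (muG c b K k <= c * Rpower (INR (S K)) b).
  { unfold muG. apply Rmult_le_compat_l; [lra|]. apply Rle_Rpower_l; auto. split.
    apply lt_0_INR; lia. apply le_INR. lia. }
  pose proof (Tprod_pos_gen (muG c b K) k ltac:(intros; unfold muG; apply Rmult_lt_0_compat; auto; apply Rpower_pos)).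
  rewrite Rmult_comm. apply Rmult_le_compat; auto; try lra. 
  unfold muG. left; apply Rmult_lt_0_compat; auto; apply Rpower_pos.
Qed.

Lemma muF_ok c b : 0 < c -> 0 <= b -> (forall i, 0 < muF c b i) /\ (forall i, muF c b i <= muF c b (S i)).
Proof.
  intros Hc Hb. split; intros i; unfold muF.
  apply Rmult_lt_0_compat; auto; apply Rpower_pos.
  apply Rmult_le_compat_l; [lra|]. apply Rle_Rpower_l; auto. split. apply lt_0_INR; lia. apply le_INR; lia.
Qed.

Lemma muG_ok c b K : 0 < c -> 0 <= b -> (forall i, 0 < muG c b K i) /\ (forall i, muG c b K i <= muG c b K (S i)).
Proof.
  intros Hc Hb. split; intros i; unfold muG.
  apply Rmult_lt_0_compat; auto; apply Rpower_pos.
  apply Rmult_le_compat_l; [lra|]. apply Rle_Rpower_l; auto. split. apply lt_0_INR; lia. apply le_INR; lia.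
Qed.

Lemma TP_G c b : 0 < c -> 0 <= b -> exists V, TP V /\
  forall k, (/2)^(S k) * (c ^ k * Rpower (INR (fact k)) b) <= V k <= c ^ k * Rpower (INR (fact k)) b.
Proof.
  intros Hc Hb. destruct (muF_ok c b Hc Hb) as [H1 H2].
  destruct (TP_lc (muF c b) H1 H2) as [V [HV HB]]. exists V. split; auto.
  intros k. rewrite <- Tprod_muF; auto.
Qed.

Lemma TP_GT c b K : 0 < c -> 0 <= b -> exists V, TP V /\
  (forall k, (k <= S K)%nat -> (/2)^(S k) * (c ^ k * Rpower (INR (fact k)) b) <= V k) /\
  (forall k, V k <= (c * Rpower (INR (S K)) b) ^ k) /\
  (forall k, V k <= c ^ k * Rpower (INR (fact k)) b).
Proof.
  intros Hc Hb. destruct (muG_ok c b K Hc Hb) as [H1 H2].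
  destruct (TP_lc (muG c b K) H1 H2) as [V [HV HB]]. exists V. split; auto. split; [|split].
  - intros k Hk. rewrite <- (Tprod_muG_eq c b K k); auto. apply HB.
  - intros k. eapply Rle_trans. apply HB. apply Tprod_muG_le; auto.
  - intros k. eapply Rle_trans. apply HB. rewrite <- Tprod_muF; auto.
    apply Tprod_mono; auto. intros i. unfold muG, muF. apply Rmult_le_compat_l; [lra|].
    apply Rle_Rpower_l; auto. split. apply lt_0_INR; lia. apply le_INR; lia.
Qed.

Lemma fin_max (f : nat -> R) (J : nat) : exists B, forall j, (j < J)%nat -> f j <= B.
Proof.
  induction J. exists 0. intros; lia.
  destruct IHJ as [B HB]. exists (Rmax B (f J)). intros j Hj.
  destruct (Nat.eq_dec j J) as [->|]. apply Rmax_r. eapply Rle_trans. apply HB; lia. apply Rmax_l.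
Qed.

Lemma pow_le1 x k : 0 <= x <= 1 -> x ^ k <= 1.
Proof. intros H. rewrite <- (pow1 k). apply pow_incr. lra. Qed.

Definition bet (j : nat) : R := 1 + / INR (S j).

Lemma INRS_pos j : 0 < INR (S j).
Proof. apply lt_0_INR; lia. Qed.

Lemma Rpower_fact_1plus k a : Rpower (INR (fact k)) (1 + a) = INR (fact k) * Rpower (INR (fact k)) a.
Proof. rewrite Rpower_plus, Rpower_1 by apply fact_pos. reflexivity. Qed.

Lemma Rpower_fact_mono k a b : a <= b -> Rpower (INR (fact k)) a <= Rpower (INR (fact k)) b.
Proof. intros; apply Rle_Rpower; auto; apply fact_ge1. Qed.

Lemma diag (H : nat -> R) (N : nat -> nat -> R) :
  (forall j, 0 < H j) -> (forall j k, 0 < N j k) ->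
  (forall j C, 0 < C -> exists k, C * H j ^ k * N j k < Rpower (INR (fact k)) (bet j)) ->
  exists W, TP W /\ SGb W /\ forall j, exists k, INR (S j) * N j k < W k.
Proof.
  intros HH HN Hdip.
  set (A := fun j => 2 / H j).
  assert (HA : forall j, 0 < A j). { intros j. unfold A. apply Rdiv_lt_0_compat; auto; lra. }
  destruct (my_choice (fun j E => 0 < E /\ forall k, (INR (S j) * A j) ^ k <= E * Rpower (INR (fact k)) (/ INR (S j))))
    as [E HE].
  { intros j. apply FBeps. apply Rinv_0_lt_compat, INRS_pos. }
  set (eps := fun j => (/2)^(S j) / E j).
  assert (Heps : forall j, 0 < eps j).
  { intros j. unfold eps. apply Rdiv_lt_0_compat. apply pow_lt; lra. apply HE. }
  set (C := fun j => 2 * INR (S j) / eps j).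
  assert (HC : forall j, 0 < C j).
  { intros j. unfold C. apply Rdiv_lt_0_compat; auto. pose proof (INRS_pos j); lra. }
  destruct (my_choice (fun j k => C j * H j ^ k * N j k < Rpower (INR (fact k)) (bet j))) as [kk Hkk].
  { intros j. apply Hdip; auto. }
  assert (Hb : forall j, 0 <= bet j). { intros j. unfold bet. pose proof (Rinv_0_lt_compat _ (INRS_pos j)). lra. }
  destruct (my_choice (fun j U => TP U /\
     (forall k, (k <= S (kk j))%nat -> (/2)^(S k) * (A j ^ k * Rpower (INR (fact k)) (bet j)) <= U k) /\
     (forall k, U k <= (A j * Rpower (INR (S (kk j))) (bet j)) ^ k) /\
     (forall k, U k <= A j ^ k * Rpower (INR (fact k)) (bet j)))) as [U HU].
  { intros j. apply TP_GT; auto. }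
  assert (HU0 : forall j k, 0 <= U j k). { intros j. apply TP_nonneg. apply HU. }
  assert (Htail : forall j k, eps j * U j k <= (/2)^(S j) * (INR (fact k) * (/ INR (S j)) ^ k * Rpower (INR (fact k)) (2 / INR (S j)))).
  { intros j k. destruct (HE j) as [HE0 HE1]. specialize (HE1 k).
    destruct (HU j) as [_ [_ [_ HU3]]]. specialize (HU3 k).
    pose proof (INRS_pos j) as Hs.
    assert (HAk : A j ^ k <= E j * Rpower (INR (fact k)) (/ INR (S j)) * (/ INR (S j)) ^ k).
    { rewrite Rpow_mult_distr in HE1. 
      apply Rmult_le_reg_l with (INR (S j) ^ k). apply pow_lt; auto.
      replace (INR (S j) ^ k * (E j * Rpower (INR (fact k)) (/ INR (S j)) * (/ INR (S j)) ^ k))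
        with (E j * Rpower (INR (fact k)) (/ INR (S j)) * (INR (S j) * / INR (S j)) ^ k) by (rewrite Rpow_mult_distr; ring).
      rewrite Rinv_r, pow1 by lra. lra. }
    unfold eps. 
    apply Rle_trans with ((/2)^(S j) / E j * (A j ^ k * Rpower (INR (fact k)) (bet j))).
    { apply Rmult_le_compat_l; auto. left; apply Heps. }
    apply Rle_trans with ((/2)^(S j) / E j * (E j * Rpower (INR (fact k)) (/ INR (S j)) * (/ INR (S j)) ^ k * Rpower (INR (fact k)) (bet j))).
    { apply Rmult_le_compat_l. left; apply Heps. apply Rmult_le_compat_r; auto. left; apply Rpower_pos. }
    right. unfold bet. rewrite Rpower_fact_1plus.
    replace (2 / INR (S j)) with (/ INR (S j) + / INR (S j)) by (field; lra).
    rewrite Rpower_plus. field. lra. }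
  assert (Hsum : forall k, ex_series (fun j => eps j * U j k)).
  { intros k. apply (ex_series_dom _ (INR (fact k) * Rpower (INR (fact k)) 2)). intros j. split.
    apply Rmult_le_pos; auto. left; auto.
    eapply Rle_trans. apply Htail. rewrite Rmult_comm. apply Rmult_le_compat_r. apply pow_le; lra.
    apply Rmult_le_compat. apply Rmult_le_pos. left; apply fact_pos. apply pow_le. left; apply Rinv_0_lt_compat, INRS_pos.
    left; apply Rpower_pos.
    - rewrite <- (Rmult_1_r (INR (fact k))) at 2. apply Rmult_le_compat_l. left; apply fact_pos.
      apply pow_le1. split. left; apply Rinv_0_lt_compat, INRS_pos. 
      rewrite <- Rinv_1. apply Rinv_le_contravar. lra. rewrite S_INR. pose proof (pos_INR j); lra.
    - apply Rpower_fact_mono. apply Rmult_le_reg_r with (INR (S j)). apply INRS_pos.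
      unfold Rdiv. rewrite Rmult_assoc, Rinv_l, Rmult_1_r by (pose proof (INRS_pos j); lra).
      rewrite S_INR. pose proof (pos_INR j); lra. }
  exists (fun k => Series (fun j => eps j * U j k)). split; [|split].
  - apply TP_sum; auto. intros j. apply TP_scal. left; auto. apply HU.
  -
    intros s Hs rho Hr.
    destruct (INR_archimed (Rmin s rho) 2 ltac:(apply Rmin_glb_lt; auto)) as [J HJ].
    assert (HJ1 : forall j, (J <= j)%nat -> 2 / INR (S j) <= s /\ / INR (S j) <= rho).
    { intros j Hj. assert (INR J <= INR (S j)) by (apply le_INR; lia).
      pose proof (Rmin_l s rho). pose proof (Rmin_r s rho). pose proof (INRS_pos j).
      assert (0 < Rmin s rho) by (apply Rmin_glb_lt; auto).
      split; apply Rmult_le_reg_r with (INR (S j)); auto; unfold Rdiv;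
        rewrite ?Rmult_assoc, Rinv_l, ?Rmult_1_r by lra; nra. }
    destruct (my_choice (fun j D => 0 < D /\ forall k, (A j * Rpower (INR (S (kk j))) (bet j) / rho) ^ k <= D * INR (fact k))) as [D HD].
    { intros j. apply FB. }
    destruct (fin_max (fun j => eps j * D j * 2 ^ (S j)) J) as [Q HQ].
    set (Q' := Rmax Q 1).
    exists Q'. intros k.
    set (X := INR (fact k) * rho ^ k * Gev s k).
    assert (HX : 0 <= X). { unfold X, Gev. apply Rmult_le_pos. apply Rmult_le_pos. left; apply fact_pos. apply pow_le; lra. left; apply Rpower_pos. }
    apply Series_le_const. intros j. split. apply Rmult_le_pos; auto. left; auto.
    destruct (Compare_dec.le_lt_dec J j) as [Hj|Hj].
    +
      destruct (HJ1 j Hj) as [Hj1 Hj2].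
      eapply Rle_trans. apply Htail.
      replace (Q' * X * (/2)^(S j)) with ((/2)^(S j) * (Q' * X)) by ring. apply Rmult_le_compat_l. apply pow_le; lra.
      apply Rle_trans with X. 2: { rewrite <- (Rmult_1_l X) at 1. apply Rmult_le_compat_r; auto. apply Rmax_r. }
      unfold X, Gev. apply Rmult_le_compat. apply Rmult_le_pos. left; apply fact_pos. apply pow_le. left; apply Rinv_0_lt_compat, INRS_pos.
      left; apply Rpower_pos.
      apply Rmult_le_compat_l. left; apply fact_pos. apply pow_incr. split; auto. left; apply Rinv_0_lt_compat, INRS_pos.
      apply Rpower_fact_mono; auto.
    +
      destruct (HD j) as [HD0 HD1]. specialize (HD1 k).
      destruct (HU j) as [_ [_ [HU2 _]]]. specialize (HU2 k).
      set (B := A j * Rpower (INR (S (kk j))) (bet j)) in *.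
      assert (HBk : B ^ k <= D j * (INR (fact k) * rho ^ k)).
      { unfold Rdiv in HD1. rewrite Rpow_mult_distr, pow_inv in HD1.
        apply Rmult_le_reg_r with (/ rho ^ k). apply Rinv_0_lt_compat, pow_lt; auto.
        replace (D j * (INR (fact k) * rho ^ k) * / rho ^ k) with (D j * INR (fact k)) by (field; apply pow_nonzero; lra). auto. }
      apply Rle_trans with (eps j * (D j * (INR (fact k) * rho ^ k))).
      { apply Rmult_le_compat_l. left; auto. eapply Rle_trans; eauto. }
      apply Rle_trans with (eps j * D j * X).
      { rewrite <- Rmult_assoc. apply Rmult_le_compat_l. apply Rmult_le_pos; left; auto.
        unfold X. rewrite <- (Rmult_1_r (INR (fact k) * rho ^ k)) at 1. apply Rmult_le_compat_l.
        apply Rmult_le_pos. left; apply fact_pos. apply pow_le; lra.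
        unfold Gev. apply Rpower_ge1. apply fact_ge1. lra. }
      specialize (HQ j Hj).
      apply Rle_trans with (Q * (/2)^(S j) * X).
      { apply Rmult_le_compat_r; auto.
        apply Rle_trans with (eps j * D j * 2 ^ S j * (/2)^(S j)).
        right. rewrite Rmult_assoc, <- Rpow_mult_distr, Rinv_r, pow1 by lra. ring.
        apply Rmult_le_compat_r; auto. apply pow_le; lra. }
      replace (Q' * X * (/2)^(S j)) with (Q' * (/2)^(S j) * X) by ring.
      apply Rmult_le_compat_r; auto. apply Rmult_le_compat_r. apply pow_le; lra. apply Rmax_l.
  -
    intros j. exists (kk j).
    set (k := kk j). specialize (Hkk j). fold k in Hkk.
    destruct (HU j) as [_ [HU1 _]]. specialize (HU1 k (le_S _ _ (le_n k))).
    eapply Rlt_le_trans. 2: { apply (Series_ge_term (fun j => eps j * U j k) j); auto.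
      intros; apply Rmult_le_pos; auto. left; auto. }
    apply Rlt_le_trans with (eps j * ((/2)^(S k) * (A j ^ k * Rpower (INR (fact k)) (bet j)))).
    2: { apply Rmult_le_compat_l; auto. left; auto. }
    assert (EA : (/2)^(S k) * A j ^ k = / 2 / H j ^ k).
    { unfold A. unfold Rdiv. rewrite Rpow_mult_distr, !pow_inv. simpl (_ ^ S k).
      field. repeat split; try (apply pow_nonzero); try lra. pose proof (HH j); lra. }
    rewrite <- (Rmult_assoc ((/2)^(S k))), EA.
    pose proof (pow_lt _ k (HH j)). pose proof (HN j k). pose proof (Heps j).
    apply Rmult_lt_reg_l with (2 * H j ^ k / eps j). apply Rdiv_lt_0_compat; lra.
    replace (2 * H j ^ k / eps j * (eps j * (/ 2 / H j ^ k * Rpower (INR (fact k)) (bet j))))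
      with (Rpower (INR (fact k)) (bet j)) by (field; split; lra).
    replace (2 * H j ^ k / eps j * (INR (S j) * N j k)) with (C j * H j ^ k * N j k) by (unfold C; field; lra).
    exact Hkk.
Qed.

Lemma fact_le_mono a b : (a <= b)%nat -> INR (fact a) <= INR (fact b).
Proof. intros H. apply le_INR. apply fact_le. auto. Qed.

Lemma gd_bound (c : nat -> R) (Hc : forall n, 0 < c n) k B :
  (forall n, (n < k)%nat -> (1 + c n) ^ k * INR (fact k) ^ (S k) <= B) ->
  forall n, c n ^ k * INR (fact k) ^ (S n) <= (1 + c n) ^ n * INR (fact n) ^ (S n) * Rmax B 1.
Proof.
  intros HB n. assert (Hcn : 0 < 1 + c n) by (pose proof (Hc n); lra).
  assert (Hck : c n ^ k <= (1 + c n) ^ k) by (apply pow_incr; pose proof (Hc n); split; lra).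
  assert (P1 : 0 <= c n ^ k) by (apply pow_le; left; auto).
  assert (P2 : 0 <= INR (fact k) ^ S n) by (apply pow_le; left; apply fact_pos).
  destruct (Compare_dec.le_lt_dec k n) as [Hkn|Hkn].
  - apply Rle_trans with ((1 + c n) ^ n * INR (fact n) ^ (S n) * 1).
    + rewrite Rmult_1_r. apply Rmult_le_compat; auto.
      apply Rle_trans with ((1 + c n) ^ k); auto. apply Rle_pow; auto. pose proof (Hc n); lra.
      apply pow_incr. split. left; apply fact_pos. apply fact_le_mono; auto.
    + apply Rmult_le_compat_l. apply Rmult_le_pos; apply pow_le; [lra| left; apply fact_pos]. apply Rmax_r.
  - apply Rle_trans with (1 * Rmax B 1).
    + rewrite Rmult_1_l. eapply Rle_trans. 2: apply Rmax_l. eapply Rle_trans. 2: apply (HB n Hkn).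
      apply Rmult_le_compat; auto. apply Rle_pow. apply fact_ge1. lia.
    + apply Rmult_le_compat_r. eapply Rle_trans; [|apply Rmax_r]; lra.
      rewrite <- (Rmult_1_l 1). apply Rmult_le_compat; try lra. apply pow_R1_Rle; pose proof (Hc n); lra.
      apply pow_R1_Rle, fact_ge1.
Qed.

Lemma gdiag (c D : nat -> R) : (forall n, 0 < c n) -> (forall n, 0 < D n) ->
  exists W, TP W /\ ~ SGr W /\
   (forall Z : nat -> R, (forall n k, INR (fact k) ^ (S n) * c n ^ k <= D n * Z k) -> forall k, W k <= Z k).
Proof.
  intros Hc HD.
  destruct (my_choice (fun n U => TP U /\ forall k, (/2)^(S k) * (c n ^ k * Rpower (INR (fact k)) (INR (S n))) <= U k <= c n ^ k * Rpower (INR (fact k)) (INR (S n)))) as [U HU].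
  { intros n. apply TP_G; auto. apply pos_INR. }
  assert (HU' : forall n k, (/2)^(S k) * (c n ^ k * INR (fact k) ^ (S n)) <= U n k <= c n ^ k * INR (fact k) ^ (S n)).
  { intros n k. rewrite <- (Rpower_pow (S n) (INR (fact k))) by apply fact_pos. apply HU. }
  set (G := fun n => Rmax (D n) 1 * ((1 + c n) ^ n * INR (fact n) ^ (S n))).
  assert (HG1 : forall n, 0 < (1 + c n) ^ n * INR (fact n) ^ (S n)).
  { intros n. apply Rmult_lt_0_compat. apply pow_lt. pose proof (Hc n); lra. apply pow_lt, fact_pos. }
  assert (HG1' : forall n, 1 <= (1 + c n) ^ n * INR (fact n) ^ (S n)).
  { intros n. rewrite <- (Rmult_1_l 1). apply Rmult_le_compat; try lra. apply pow_R1_Rle; pose proof (Hc n); lra.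
    apply pow_R1_Rle, fact_ge1. }
  assert (HDm : forall n, 1 <= Rmax (D n) 1) by (intros; apply Rmax_r).
  assert (HG : forall n, 0 < G n).
  { intros n. unfold G. apply Rmult_lt_0_compat; auto. pose proof (HDm n); lra. }
  set (del := fun n => (/2)^(S n) / G n).
  assert (Hdel : forall n, 0 < del n). { intros n. unfold del. apply Rdiv_lt_0_compat; auto. apply pow_lt; lra. }
  assert (HU0 : forall n k, 0 <= U n k). { intros n. apply TP_nonneg, HU. }
  assert (Hterm : forall n k, del n * U n k <= (/2)^(S n) * (c n ^ k * INR (fact k) ^ (S n)) / G n).
  { intros n k. apply Rle_trans with (del n * (c n ^ k * INR (fact k) ^ (S n))).
    apply Rmult_le_compat_l. left; auto. apply HU'. right. unfold del. unfold Rdiv. ring. }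
  assert (Hsum : forall k, ex_series (fun n => del n * U n k)).
  { intros k. destruct (fin_max (fun n => (1 + c n) ^ k * INR (fact k) ^ (S k)) k) as [B HB].
    apply (ex_series_dom _ (Rmax B 1)). intros n. split. apply Rmult_le_pos; auto. left; auto.
    eapply Rle_trans. apply Hterm.
    pose proof (gd_bound c Hc k B HB n) as X.
    assert (Hy : (c n ^ k * INR (fact k) ^ (S n)) / G n <= Rmax B 1).
    { unfold Rdiv. apply Rmult_le_reg_r with (G n); auto.
      rewrite Rmult_assoc, Rinv_l, Rmult_1_r by (pose proof (HG n); lra).
      eapply Rle_trans. apply X. unfold G. pose proof (HG1 n). pose proof (HDm n).
      assert (1 <= Rmax B 1) by apply Rmax_r.
      set (P := (1 + c n) ^ n * INR (fact n) ^ S n) in *.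
      assert (0 <= (Rmax (D n) 1 - 1) * (P * Rmax B 1)) by (apply Rmult_le_pos; nra).
      nra. }
    replace ((/ 2) ^ S n * (c n ^ k * INR (fact k) ^ S n) / G n) with ((/2)^(S n) * ((c n ^ k * INR (fact k) ^ (S n)) / G n)) by (unfold Rdiv; ring).
    rewrite Rmult_comm. apply Rmult_le_compat_r. apply pow_le; lra. auto. }
  exists (fun k => Series (fun n => del n * U n k)). split; [|split].
  - apply TP_sum; auto. intros n. apply TP_scal. left; auto. apply HU.
  - intros [s [Hs [rho [Hr [C HC]]]]].
    destruct (INR_archimed 1 (s + 1) ltac:(lra)) as [n Hn]. rewrite Rmult_1_r in Hn.
    destruct (fact_beats (2 * rho / c n) (Rabs C * 2 / del n)) as [k Hk].
    { apply Rlt_le, Rdiv_lt_0_compat; auto; lra. }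
    specialize (HC k). 
    assert (L1 : del n * U n k <= Series (fun n => del n * U n k)).
    { apply (Series_ge_term (fun n => del n * U n k)); auto. intros; apply Rmult_le_pos; auto; left; auto. }
    assert (L2 : del n * ((/2)^(S k) * (c n ^ k * INR (fact k) ^ (S n))) <= del n * U n k).
    { apply Rmult_le_compat_l. left; auto. apply HU'. }
    assert (L3 : INR (fact k) * INR (fact k) * Rpower (INR (fact k)) s <= INR (fact k) ^ (S n)).
    { rewrite <- (Rpower_pow (S n) (INR (fact k))) by apply fact_pos.
      rewrite <- (Rpower_1 (INR (fact k))) at 1 2 by apply fact_pos.
      rewrite <- !Rpower_plus. apply Rpower_fact_mono. rewrite S_INR. lra. }
    unfold Gev in HC.
    pose proof (fact_pos k) as Fk. pose proof (Hdel n). pose proof (Hc n).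
    pose proof (Rpower_pos (INR (fact k)) s) as Ps.
    assert (Q : del n * (/2)^(S k) * c n ^ k * (INR (fact k) * INR (fact k) * Rpower (INR (fact k)) s)
                <= Rabs C * (INR (fact k) * rho ^ k * Rpower (INR (fact k)) s)).
    { apply Rle_trans with (C * (INR (fact k) * rho ^ k * Rpower (INR (fact k)) s)).
      2: { apply Rmult_le_compat_r. apply Rmult_le_pos. apply Rmult_le_pos; auto. left; auto. apply pow_le; lra. left; auto. apply Rle_abs. }
      eapply Rle_trans; [|apply HC]. eapply Rle_trans; [|apply L1]. eapply Rle_trans; [|apply L2].
      apply Rle_trans with (del n * ((/2)^(S k) * (c n ^ k * (INR (fact k) * INR (fact k) * Rpower (INR (fact k)) s)))).
      right; ring.
      apply Rmult_le_compat_l. left; auto. apply Rmult_le_compat_l. apply pow_le; lra.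
      apply Rmult_le_compat_l. apply pow_le; lra. auto. }
    assert (Hden : 0 < del n * (/2)^(S k) * c n ^ k).
    { apply Rmult_lt_0_compat. apply Rmult_lt_0_compat; auto. apply pow_lt; lra. apply pow_lt; lra. }
    assert (Q1 : del n * (/2)^(S k) * c n ^ k * INR (fact k) <= Rabs C * rho ^ k).
    { apply Rmult_le_reg_r with (INR (fact k) * Rpower (INR (fact k)) s). apply Rmult_lt_0_compat; auto.
      replace (del n * (/ 2) ^ S k * c n ^ k * INR (fact k) * (INR (fact k) * Rpower (INR (fact k)) s))
        with (del n * (/ 2) ^ S k * c n ^ k * (INR (fact k) * INR (fact k) * Rpower (INR (fact k)) s)) by ring.
      eapply Rle_trans. apply Q. right; ring. }
    assert (E : Rabs C * 2 / del n * (2 * rho / c n) ^ k = Rabs C * rho ^ k / (del n * (/2)^(S k) * c n ^ k)).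
    { unfold Rdiv. rewrite !Rpow_mult_distr, !pow_inv. simpl (2 ^ S k).
      field. repeat split; try lra; apply pow_nonzero; lra. }
    assert (Q2 : INR (fact k) <= Rabs C * 2 / del n * (2 * rho / c n) ^ k).
    { rewrite E. unfold Rdiv. apply Rmult_le_reg_r with (del n * (/2)^(S k) * c n ^ k); auto.
      replace (Rabs C * rho ^ k * / (del n * (/ 2) ^ S k * c n ^ k) * (del n * (/ 2) ^ S k * c n ^ k)) with (Rabs C * rho ^ k) by (field; repeat split; try lra; try (apply pow_nonzero; lra)).
      rewrite Rmult_comm. exact Q1. }
    lra.
  - intros Z HZ k.
    assert (HZ0 : forall k, 0 <= Z k).
    { intros k'. specialize (HZ O k'). pose proof (HD O). 
      assert (0 < INR (fact k') ^ 1 * c O ^ k') by (apply Rmult_lt_0_compat; apply pow_lt; [apply fact_pos| apply Hc]).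
      nra. }
    apply Series_le_const. intros n. split. apply Rmult_le_pos; auto. left; auto.
    eapply Rle_trans. apply Hterm. specialize (HZ n k).
    unfold G. unfold Rdiv. rewrite (Rmult_comm (Z k)), Rmult_assoc. apply Rmult_le_compat_l. apply pow_le; lra.
    rewrite Rinv_mult. 
    apply Rle_trans with ((c n ^ k * INR (fact k) ^ S n) * / D n).
    + apply Rmult_le_compat_l. apply Rmult_le_pos; apply pow_le; [left; auto| left; apply fact_pos].
      apply Rle_trans with (/ Rmax (D n) 1 * 1).
      * apply Rmult_le_compat_l. left; apply Rinv_0_lt_compat; pose proof (HDm n); lra.
        pose proof (HG1' n). apply Rmult_le_reg_l with ((1 + c n) ^ n * INR (fact n) ^ S n); [lra|]. rewrite Rinv_r by lra. lra.
      * rewrite Rmult_1_r. apply Rinv_le_contravar; auto. apply Rmax_l.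
    + apply Rmult_le_reg_l with (D n); auto. rewrite <- Rmult_assoc, (Rmult_comm (D n)), Rmult_assoc, Rinv_r, Rmult_1_r by (pose proof (HD n); lra).
      rewrite Rmult_comm. lra.
Qed.

Definition wv (om : R -> R) (rho : R) (k : nat) : R := / rho * phi_star om (rho * INR k).

Section Om.
Variable om : R -> R.
Hypothesis Hw : weight om.

Lemma phi_nonneg s : 0 <= phi_of om s.
Proof. destruct Hw as [_ [H _]]. apply H. left; apply exp_pos. Qed.

Lemma phi_0 : phi_of om 0 = 0.
Proof. destruct Hw as [_ [_ [_ [H _]]]]. unfold phi_of. rewrite exp_0. apply H; lra. Qed.

Definition Eset (t : R) : R -> Prop := fun y => exists s, 0 <= s /\ y = s * t - phi_of om s.

Lemma Eset_bounded t : 0 <= t -> exists B, forall s, 0 <= s -> s * t - phi_of om s <= B.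
Proof.
  intros Ht. destruct Hw as [_ [_ [_ [_ [_ [_ [Hlog _]]]]]]].
  destruct (Hlog (/ (t + 1)) ltac:(apply Rinv_0_lt_compat; lra)) as [T HT].
  set (T' := Rmax T 1).
  exists (t * ln T'). intros s Hs.
  destruct (Rle_dec T' (exp s)) as [Hle|Hlt].
  - assert (H1 : Rabs (ln (exp s)) <= / (t + 1) * om (exp s)).
    { apply HT. eapply Rle_trans; [apply Rmax_l| exact Hle]. }
    rewrite ln_exp, Rabs_pos_eq in H1 by auto.
    assert (H2 : (t + 1) * s <= om (exp s)).
    { apply Rmult_le_reg_l with (/ (t + 1)). apply Rinv_0_lt_compat; lra.
      rewrite <- Rmult_assoc, Rinv_l, Rmult_1_l by lra. auto. }
    unfold phi_of. assert (0 <= ln T'). { rewrite <- ln_1. apply ln_le. lra. apply Rmax_r. }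
    assert (0 <= t * ln T') by (apply Rmult_le_pos; auto). nra.
  - assert (Hs' : s <= ln T').
    { rewrite <- (ln_exp s). apply ln_le. apply exp_pos. lra. }
    pose proof (phi_nonneg s). nra.
Qed.

Lemma Lub_fin t : 0 <= t -> Lub_Rbar (Eset t) = Finite (phi_star om t).
Proof.
  intros Ht. destruct (Eset_bounded t Ht) as [B HB].
  destruct (Lub_Rbar_correct (Eset t)) as [Hub Hl].
  unfold phi_star. fold (Eset t).
  destruct (Lub_Rbar (Eset t)) as [l| |] eqn:E; simpl; auto.
  - exfalso. specialize (Hl (Finite B)). simpl in Hl. apply Hl.
    intros x [s [Hs ->]]. simpl. apply HB; auto.
  - exfalso. specialize (Hub (0 * t - phi_of om 0) (ex_intro _ 0 (conj (Rle_refl 0) eq_refl))). simpl in Hub. auto.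
Qed.

Lemma ps_ge t s : 0 <= t -> 0 <= s -> s * t - phi_of om s <= phi_star om t.
Proof.
  intros Ht Hs. destruct (Lub_Rbar_correct (Eset t)) as [Hub _].
  rewrite Lub_fin in Hub by auto. apply (Hub (s * t - phi_of om s)). exists s; auto.
Qed.

Lemma ps_le t B : 0 <= t -> (forall s, 0 <= s -> s * t - phi_of om s <= B) -> phi_star om t <= B.
Proof.
  intros Ht H. destruct (Lub_Rbar_correct (Eset t)) as [_ Hl].
  rewrite Lub_fin in Hl by auto. apply (Hl (Finite B)). intros x [s [Hs ->]]. simpl. auto.
Qed.

Lemma ps_nonneg t : 0 <= t -> 0 <= phi_star om t.
Proof. intros Ht. pose proof (ps_ge t 0 Ht (Rle_refl 0)) as H0. rewrite phi_0, Rmult_0_l in H0. lra. Qed.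

Lemma ps_mono t t' : 0 <= t -> t <= t' -> phi_star om t <= phi_star om t'.
Proof.
  intros Ht Htt. apply ps_le; auto. intros s Hs.
  apply Rle_trans with (s * t' - phi_of om s). nra. apply ps_ge; auto; lra.
Qed.

Lemma wv_mono_rho r r' k : 0 < r' -> r' <= r -> wv om r' k <= wv om r k.
Proof.
  intros Hr' Hrr. unfold wv. pose proof (pos_INR k).
  assert (Hr : 0 < r) by lra.
  apply Rmult_le_reg_l with r'; auto. rewrite <- Rmult_assoc, Rinv_r, Rmult_1_l by lra.
  apply ps_le. apply Rmult_le_pos; lra.
  intros s Hs.
  pose proof (ps_ge (r * INR k) s ltac:(apply Rmult_le_pos; lra) Hs).
  pose proof (phi_nonneg s).
  apply Rle_trans with (r' * / r * (s * (r * INR k) - phi_of om s)).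
  - replace (r' * / r * (s * (r * INR k) - phi_of om s)) with (s * (r' * INR k) - r' / r * phi_of om s) by (field; lra).
    assert (r' / r <= 1). { unfold Rdiv. apply Rmult_le_reg_r with r; auto. rewrite Rmult_assoc, Rinv_l by lra. lra. }
    nra.
  - rewrite Rmult_assoc. apply Rmult_le_compat_l. lra.
    apply Rmult_le_compat_l. left; apply Rinv_0_lt_compat; lra. auto.
Qed.

Lemma wv_mono_k r k k' : 0 < r -> (k <= k')%nat -> wv om r k <= wv om r k'.
Proof.
  intros Hr Hk. unfold wv. apply Rmult_le_compat_l. left; apply Rinv_0_lt_compat; lra.
  apply ps_mono. apply Rmult_le_pos. lra. apply pos_INR.
  apply Rmult_le_compat_l. lra. apply le_INR; auto.
Qed.

Lemma wv_nonneg r k : 0 < r -> 0 <= wv om r k.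
Proof.
  intros Hr. unfold wv. apply Rmult_le_pos. left; apply Rinv_0_lt_compat; lra.
  apply ps_nonneg. apply Rmult_le_pos. lra. apply pos_INR.
Qed.

Lemma wv_L (L k : nat) : (0 < L)%nat -> wv om (INR L) k = / INR L * wv om 1 (L * k).
Proof.
  intros HL. unfold wv. rewrite mult_INR. f_equal. rewrite Rinv_1, Rmult_1_l, Rmult_1_l. reflexivity.
Qed.

Lemma wv_invL (L j : nat) : (0 < L)%nat -> wv om (/ INR L) (L * j) = INR L * wv om 1 j.
Proof.
  intros HL. assert (0 < INR L) by (apply lt_0_INR; auto). unfold wv. rewrite mult_INR.
  rewrite Rinv_inv, Rinv_1, Rmult_1_l, Rmult_1_l. f_equal. f_equal. field. lra.
Qed.
End Om.

Lemma fact_add_le a b : (fact (a + b) <= fact a * (a + b) ^ b)%nat.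
Proof.
  induction b. rewrite Nat.add_0_r. simpl. lia.
  rewrite Nat.add_succ_r. simpl fact. simpl Nat.pow.
  assert ((a + b) ^ b <= S (a + b) ^ b)%nat by (apply Nat.pow_le_mono_l; lia).
  assert (A : (fact (a + b) <= fact a * S (a + b) ^ b)%nat).
  { eapply Nat.le_trans. apply IHb. apply Nat.mul_le_mono_l. auto. }
  apply (Nat.mul_le_mono_l _ _ (S (a + b))) in A. 
  simpl in A. lia.
Qed.

Lemma fact_mul_le L q : (fact (L * q) <= L ^ (L * q) * fact q ^ L)%nat.
Proof.
  induction q. rewrite Nat.mul_0_r. simpl. rewrite Nat.pow_1_l. lia.
  replace (L * S q)%nat with (L * q + L)%nat by lia.
  eapply Nat.le_trans. apply fact_add_le.
  replace (L * q + L)%nat with (L * S q)%nat by lia.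
  change (fact (S q)) with (S q * fact q)%nat.
  rewrite !Nat.pow_mul_l.
  replace (L * S q)%nat with (L * q + L)%nat by lia. rewrite Nat.pow_add_r.
  apply (Nat.mul_le_mono_r _ _ (L ^ L * S q ^ L)%nat) in IHq.
  eapply Nat.le_trans. exact IHq. apply Nat.eq_le_incl. ring.
Qed.

Lemma INR_fact_mul_le L q : INR (fact (L * q)) <= INR L ^ (L * q) * INR (fact q) ^ L.
Proof.
  rewrite <- !pow_INR, <- mult_INR. apply le_INR. apply fact_mul_le.
Qed.

Lemma TP_G1 b : 0 <= b -> exists V, TP V /\
  forall k, (/2)^(S k) * Rpower (INR (fact k)) b <= V k <= Rpower (INR (fact k)) b.
Proof.
  intros Hb. destruct (TP_G 1 b ltac:(lra) Hb) as [V [HV HB]]. exists V. split; auto.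
  intros k. specialize (HB k). rewrite pow1, !Rmult_1_l in HB. apply HB.
Qed.

Lemma notSGb_gen V b : 1 < b -> (forall k, (/2)^(S k) * Rpower (INR (fact k)) b <= V k) -> ~ SGb V.
Proof.
  intros Hb HV HS.
  set (s := (b - 1) / 2).
  assert (Hs : 0 < s) by (unfold s; lra).
  destruct (HS s Hs 1 ltac:(lra)) as [C HC].
  destruct (FBeps s 4 Hs) as [E [HE0 HE]].
  destruct (pow2_unb (2 * Rabs C * E)) as [k Hk].
  specialize (HC k). specialize (HV k). specialize (HE k). unfold Gev in HC. rewrite pow1, Rmult_1_r in HC.
  assert (Eb : Rpower (INR (fact k)) b = INR (fact k) * Rpower (INR (fact k)) s * Rpower (INR (fact k)) s).
  { rewrite <- (Rpower_1 (INR (fact k))) at 2 by apply fact_pos. rewrite Rmult_assoc, <- !Rpower_plus.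
    f_equal. unfold s; field. }
  pose proof (fact_pos k). pose proof (Rpower_pos (INR (fact k)) s).
  assert (H1 : (/2)^(S k) * Rpower (INR (fact k)) s <= Rabs C).
  { apply Rmult_le_reg_r with (INR (fact k) * Rpower (INR (fact k)) s). apply Rmult_lt_0_compat; auto.
    apply Rle_trans with ((/2)^(S k) * Rpower (INR (fact k)) b). right; rewrite Eb; ring.
    eapply Rle_trans. apply HV. eapply Rle_trans. apply HC.
    apply Rmult_le_compat_r. left; apply Rmult_lt_0_compat; auto. apply Rle_abs. }
  assert (H2 : 4 ^ k * (/2)^(S k) <= E * Rabs C).
  { apply Rle_trans with (E * Rpower (INR (fact k)) s * (/2)^(S k)).
    apply Rmult_le_compat_r; auto. apply pow_le; lra.
    rewrite Rmult_assoc. apply Rmult_le_compat_l; lra. }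
  replace (4 ^ k * (/2)^(S k)) with (2 ^ k / 2) in H2.
  2: { replace 4 with (2 * 2) by ring. rewrite Rpow_mult_distr. simpl. rewrite pow_inv.
       field. apply pow_nonzero; lra. }
  pose proof (Rabs_pos C). lra.
Qed.


Lemma dips_SMb M V b : (forall k, 0 < M k) -> (forall k, V k <= Rpower (INR (fact k)) b) -> ~ SMb M V ->
  exists rho, 0 < rho /\ forall C, 0 < C -> exists k, C * rho ^ k * (INR (fact k) * M k) < Rpower (INR (fact k)) b.
Proof.
  intros HM HV HnS. apply not_all_ex_not in HnS. destruct HnS as [rho Hr].
  apply imply_to_and in Hr. destruct Hr as [Hr Hn]. exists rho. split; auto.
  intros C HC. apply not_ex_all_not with (n := C) in Hn. apply not_all_ex_not in Hn. destruct Hn as [k Hk].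
  exists k. apply Rnot_le_lt in Hk. eapply Rlt_le_trans; [|apply HV]. 
  replace (C * rho ^ k * (INR (fact k) * M k)) with (C * (INR (fact k) * rho ^ k * M k)) by ring. auto.
Qed.

Lemma caseM1 M : (forall k, 0 < M k) -> (forall V, TP V -> (SGb V <-> SMb M V)) -> False.
Proof.
  intros HM Heq.
  destruct (my_choice (fun j V => TP V /\ forall k, (/2)^(S k) * Rpower (INR (fact k)) (bet j) <= V k <= Rpower (INR (fact k)) (bet j))) as [VG HVG].
  { intros j. apply TP_G1. unfold bet. pose proof (Rinv_0_lt_compat _ (INRS_pos j)). lra. }
  assert (Hd : forall j, exists rho, 0 < rho /\ forall C, 0 < C -> exists k, C * rho ^ k * (INR (fact k) * M k) < Rpower (INR (fact k)) (bet j)).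
  { intros j. apply (dips_SMb M (VG j)); auto. apply HVG. intros HS. apply Heq in HS; [|apply HVG].
    revert HS. apply (notSGb_gen _ (bet j)). unfold bet. pose proof (Rinv_0_lt_compat _ (INRS_pos j)). lra.
    apply HVG. }
  destruct (my_choice _ Hd) as [H HH].
  destruct (diag H (fun j k => INR (fact k) * M k)) as [W [HW [HWG HWd]]].
  - apply HH. - intros; apply Rmult_lt_0_compat; auto; apply fact_pos. - apply HH.
  - apply Heq in HWG; auto. destruct (HWG 1 ltac:(lra)) as [C HC].
    destruct (INR_archimed 1 C ltac:(lra)) as [j Hj]. rewrite Rmult_1_r in Hj.
    destruct (HWd j) as [k Hk]. specialize (HC k). rewrite pow1, Rmult_1_r in HC.
    pose proof (fact_pos k). pose proof (HM k). rewrite S_INR in Hk.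
    assert (C * (INR (fact k) * M k) <= (INR j + 1) * (INR (fact k) * M k)).
    { apply Rmult_le_compat_r. apply Rmult_le_pos; lra. lra. }
    lra.
Qed.

Lemma caseM2 M : (forall k, 0 < M k) -> (forall V, TP V -> (SGb V <-> SMr M V)) -> False.
Proof.
  intros HM Heq.
  destruct (my_choice (fun j V => TP V /\ forall k, (/2)^(S k) * Rpower (INR (fact k)) (bet j) <= V k <= Rpower (INR (fact k)) (bet j))) as [VG HVG].
  { intros j. apply TP_G1. unfold bet. pose proof (Rinv_0_lt_compat _ (INRS_pos j)). lra. }
  destruct (diag (fun _ => 1) (fun j k => INR (S j) ^ k * (INR (fact k) * M k))) as [W [HW [HWG HWd]]].
  - intros; lra.
  - intros; apply Rmult_lt_0_compat. apply pow_lt, INRS_pos. apply Rmult_lt_0_compat; auto; apply fact_pos.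
  - intros j C HC.
    assert (HnS : ~ SMr M (VG j)).
    { intros HS. apply Heq in HS; [|apply HVG]. revert HS. apply (notSGb_gen _ (bet j)).
      unfold bet. pose proof (Rinv_0_lt_compat _ (INRS_pos j)). lra. apply HVG. }
    apply Classical_Prop.NNPP. intros Hn. apply HnS. exists (INR (S j)). split. apply INRS_pos.
    exists C. intros k. apply Rnot_lt_le. intros Hk. apply Hn. exists k.
    rewrite pow1, Rmult_1_r. eapply Rlt_le_trans. 2: apply HVG.
    replace (C * (INR (S j) ^ k * (INR (fact k) * M k))) with (C * (INR (fact k) * INR (S j) ^ k * M k)) by ring. auto.
  - apply Heq in HWG; auto. destruct HWG as [rho [Hr [C HC]]].
    destruct (INR_archimed 1 (Rmax C rho) ltac:(lra)) as [j Hj]. rewrite Rmult_1_r in Hj.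
    destruct (HWd j) as [k Hk]. specialize (HC k).
    pose proof (fact_pos k). pose proof (HM k).
    assert (H1 : C <= INR (S j)). { rewrite S_INR. pose proof (Rmax_l C rho). lra. }
    assert (H2 : rho ^ k <= INR (S j) ^ k). { apply pow_incr. split. lra. rewrite S_INR. pose proof (Rmax_r C rho). lra. }
    assert (C * (INR (fact k) * rho ^ k * M k) <= INR (S j) * (INR (S j) ^ k * (INR (fact k) * M k))).
    { destruct (Rle_dec 0 C).
      - replace (INR (S j) * (INR (S j) ^ k * (INR (fact k) * M k))) with (INR (S j) * (INR (fact k) * INR (S j) ^ k * M k)) by ring.
        apply Rmult_le_compat; auto. apply Rmult_le_pos. apply Rmult_le_pos. lra. apply pow_le; lra. lra.
        apply Rmult_le_compat_r. lra. apply Rmult_le_compat_l; lra.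
      - apply Rle_trans with 0. assert (0 <= INR (fact k) * rho ^ k * M k). { apply Rmult_le_pos. apply Rmult_le_pos. lra. apply pow_le; lra. lra. } nra.
        apply Rmult_le_pos. left; apply INRS_pos. apply Rmult_le_pos. apply pow_le. left; apply INRS_pos. apply Rmult_le_pos; lra. }
    lra.
Qed.

Lemma gev_int_SGr V n : (forall k, V k <= Rpower (INR (fact k)) (INR (S (S n)))) -> SGr V.
Proof.
  intros HV. exists (INR (S n)). split. apply INRS_pos. exists 1. split. lra. exists 1.
  intros k. rewrite pow1, Rmult_1_r, Rmult_1_l. unfold Gev. eapply Rle_trans. apply HV.
  rewrite S_INR at 1. rewrite Rplus_comm, Rpower_plus, Rpower_1 by apply fact_pos. right; ring.
Qed.

Lemma caseM34 M : (forall k, 0 < M k) -> (forall V, TP V -> SGr V -> SMr M V) ->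
  exists W, TP W /\ ~ SGr W /\ forall k, W k <= M k.
Proof.
  intros HM Hinc.
  destruct (my_choice (fun n V => TP V /\ forall k, (/2)^(S k) * Rpower (INR (fact k)) (INR (S (S n))) <= V k <= Rpower (INR (fact k)) (INR (S (S n))))) as [VG HVG].
  { intros n. apply TP_G1. apply pos_INR. }
  assert (Hb : forall n, exists rC, 0 < fst rC /\ 0 < snd rC /\ forall k, VG n k <= snd rC * (INR (fact k) * fst rC ^ k * M k)).
  { intros n. destruct (Hinc (VG n)) as [rho [Hrho [C HC]]]. apply HVG.
    apply (gev_int_SGr _ n). apply HVG.
    exists (rho, Rmax C 1). simpl. split; auto. split. pose proof (Rmax_r C 1); lra.
    intros k. eapply Rle_trans. apply HC. apply Rmult_le_compat_r. apply Rmult_le_pos. apply Rmult_le_pos.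
    left; apply fact_pos. apply pow_le; lra. left; auto. apply Rmax_l. }
  destruct (my_choice _ Hb) as [rC HrC].
  destruct (gdiag (fun n => / (2 * fst (rC n))) (fun n => 2 * snd (rC n))) as [W [HW [HnG HZ]]].
  - intros n. apply Rinv_0_lt_compat. pose proof (proj1 (HrC n)). lra.
  - intros n. pose proof (proj1 (proj2 (HrC n))). lra.
  - exists W. split; auto. split; auto. apply HZ. intros n k.
    destruct (HrC n) as [H1 [H2 H3]]. specialize (H3 k). destruct (HVG n) as [_ H4]. specialize (H4 k).
    rewrite (Rpower_pow (S (S n))) in H4 by apply fact_pos.
    destruct H4 as [H4 _].
    set (r := fst (rC n)) in *. set (C := snd (rC n)) in *.
    pose proof (fact_pos k).
    assert (E1 : (/2)^(S k) * INR (fact k) ^ S (S n) = INR (fact k) * (/2 * (INR (fact k) ^ S n * (/2)^k))) by (simpl; ring).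
    rewrite E1 in H4.
    assert (H5 : INR (fact k) * (/2 * (INR (fact k) ^ S n * (/2)^k)) <= INR (fact k) * (C * r ^ k * M k)).
    { eapply Rle_trans. apply H4. eapply Rle_trans. apply H3. right; ring. }
    apply Rmult_le_reg_l in H5; auto.
    assert (H6 : INR (fact k) ^ S n * (/2)^k <= 2 * C * r ^ k * M k) by lra.
    rewrite Rinv_mult, Rpow_mult_distr.
    replace (2 * C * M k) with (2 * C * r ^ k * M k * (/ r) ^ k) by (rewrite pow_inv; field; apply pow_nonzero; lra).
    replace (INR (fact k) ^ S n * ((/ 2) ^ k * (/ r) ^ k)) with (INR (fact k) ^ S n * (/2)^k * (/ r) ^ k) by ring.
    apply Rmult_le_compat_r; auto. apply pow_le. left; apply Rinv_0_lt_compat; auto.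
Qed.

Lemma SMb_SMr M V : SMb M V -> SMr M V.
Proof. intros H. exists 1. split. lra. apply H; lra. Qed.

Lemma caseM3 M : (forall k, 0 < M k) -> (forall V, TP V -> (SGr V <-> SMb M V)) -> False.
Proof.
  intros HM Heq.
  destruct (caseM34 M HM) as [W [HW [HnG HWM]]].
  { intros V HV HG. apply SMb_SMr. apply Heq; auto. }
  apply HnG. apply Heq; auto. intros rho Hr.
  destruct (FB (/ rho)) as [C0 [HC0 H0]]. exists C0. intros k.
  eapply Rle_trans. apply HWM. specialize (H0 k). rewrite pow_inv in H0.
  pose proof (pow_lt rho k Hr). pose proof (HM k).
  apply Rmult_le_compat_r with (r := rho ^ k) in H0; [|lra].
  rewrite Rinv_l in H0 by lra.
  apply Rle_trans with (1 * M k). lra.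
  replace (C0 * (INR (fact k) * rho ^ k * M k)) with (C0 * INR (fact k) * rho ^ k * M k) by ring.
  apply Rmult_le_compat_r; lra.
Qed.

Lemma caseM4 M : (forall k, 0 < M k) -> (forall V, TP V -> (SGr V <-> SMr M V)) -> False.
Proof.
  intros HM Heq.
  destruct (caseM34 M HM) as [W [HW [HnG HWM]]].
  { intros V HV HG. apply Heq; auto. }
  apply HnG. apply Heq; auto. exists 1. split. lra. exists 1. intros k.
  eapply Rle_trans. apply HWM. rewrite pow1. pose proof (fact_ge1 k). pose proof (HM k). nra.
Qed.

Lemma exp_le a b : a <= b -> exp a <= exp b.
Proof. intros [H|H]. left; apply exp_increasing; auto. subst; lra. Qed.

Lemma exp_mulpow (L : nat) x : exp (INR L * x) = exp x ^ L.
Proof. induction L. simpl. rewrite Rmult_0_l, exp_0. reflexivity.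
  rewrite S_INR, Rmult_plus_distr_r, Rmult_1_l, exp_plus, IHL. simpl. ring. Qed.

Lemma expneg a b : exp (- a * b) = / exp (a * b).
Proof. rewrite <- exp_Ropp. f_equal. ring. Qed.

Lemma om_ineq V om rho k C : V k * exp (- / rho * phi_star om (rho * INR k)) <= C <-> V k <= C * exp (wv om rho k).
Proof.
  unfold wv. rewrite expneg. pose proof (exp_pos (/ rho * phi_star om (rho * INR k))).
  split; intros H1.
  - apply Rmult_le_reg_r with (/ exp (/ rho * phi_star om (rho * INR k))). apply Rinv_0_lt_compat; auto.
    rewrite Rmult_assoc, Rinv_r, Rmult_1_r by lra. auto.
  - apply Rmult_le_reg_r with (exp (/ rho * phi_star om (rho * INR k))); auto.
    rewrite Rmult_assoc, Rinv_l, Rmult_1_r by lra. auto.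
Qed.

Lemma caseO6 om : weight om -> (forall V, TP V -> (SGb V <-> SOr om V)) -> False.
Proof.
  intros Hw Heq.
  destruct (my_choice (fun j V => TP V /\ forall k, (/2)^(S k) * Rpower (INR (fact k)) (bet j) <= V k <= Rpower (INR (fact k)) (bet j))) as [VG HVG].
  { intros j. apply TP_G1. unfold bet. pose proof (Rinv_0_lt_compat _ (INRS_pos j)). lra. }
  destruct (diag (fun _ => 1) (fun j k => exp (wv om (INR (S j)) k))) as [W [HW [HWG HWd]]].
  - intros; lra.
  - intros; apply exp_pos.
  - intros j C HC.
    assert (HnS : ~ SOr om (VG j)).
    { intros HS. apply Heq in HS; [|apply HVG]. revert HS. apply (notSGb_gen _ (bet j)).
      unfold bet. pose proof (Rinv_0_lt_compat _ (INRS_pos j)). lra. apply HVG. }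
    apply Classical_Prop.NNPP. intros Hn. apply HnS. exists (INR (S j)). split. apply INRS_pos.
    exists C. intros k. apply om_ineq. apply Rnot_lt_le. intros Hk. apply Hn. exists k.
    rewrite pow1, Rmult_1_r. eapply Rlt_le_trans. 2: apply HVG. auto.
  - apply Heq in HWG; auto. destruct HWG as [rho [Hr [C HC]]].
    destruct (INR_archimed 1 (Rmax C rho) ltac:(lra)) as [j Hj]. rewrite Rmult_1_r in Hj.
    destruct (HWd j) as [k Hk]. specialize (HC k). apply om_ineq in HC.
    assert (H1 : C <= INR (S j)). { rewrite S_INR. pose proof (Rmax_l C rho). lra. }
    assert (H2 : wv om rho k <= wv om (INR (S j)) k).
    { apply wv_mono_rho; auto. rewrite S_INR. pose proof (Rmax_r C rho). lra. }
    apply exp_le in H2. 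
    assert (C * exp (wv om rho k) <= INR (S j) * exp (wv om (INR (S j)) k)).
    { destruct (Rle_dec 0 C). apply Rmult_le_compat; auto. left; apply exp_pos.
      pose proof (exp_pos (wv om rho k)). pose proof (exp_pos (wv om (INR (S j)) k)). pose proof (INRS_pos j). nra. }
    lra.
Qed.

Lemma pow_lt_inv x y L : 0 <= x -> 0 <= y -> x ^ L < y ^ L -> x < y.
Proof. intros Hx Hy H. destruct (Rlt_dec x y); auto. exfalso.
  assert (y ^ L <= x ^ L) by (apply pow_incr; lra). lra. Qed.

Lemma Rpower_pow_base x n b : 0 < x -> Rpower (x ^ n) b = (Rpower x b) ^ n.
Proof.
  intros Hx. rewrite <- Rpower_pow by auto. rewrite <- Rpower_pow by apply Rpower_pos.
  rewrite !Rpower_mult. f_equal. ring.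
Qed.

Lemma div_bounds L m : (0 < L)%nat -> (L * (m / L) <= m /\ m < L * S (m / L))%nat.
Proof.
  intros HL. pose proof (Nat.div_mod m L ltac:(lia)). pose proof (Nat.mod_upper_bound m L ltac:(lia)). lia.
Qed.

Lemma fact_S_le j : INR (fact (S j)) <= 2 ^ (S j) * INR (fact j).
Proof.
  rewrite fact_simpl, mult_INR. apply Rmult_le_compat_r. left; apply fact_pos.
  left. apply pow2_ge.
Qed.

Lemma fact_block L j : (0 < L)%nat -> INR (fact (L * S j)) <= ((2 * INR L) ^ (S j) * INR (fact j)) ^ L.
Proof.
  intros HL. eapply Rle_trans. apply INR_fact_mul_le.
  replace (L * S j)%nat with (S j * L)%nat by lia.
  rewrite pow_mult, <- Rpow_mult_distr. apply pow_incr. split.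
  apply Rmult_le_pos. apply pow_le, pos_INR. left; apply fact_pos.
  apply Rle_trans with (INR L ^ (S j) * (2 ^ (S j) * INR (fact j))).
  apply Rmult_le_compat_l. apply pow_le, pos_INR. apply fact_S_le.
  right; rewrite Rpow_mult_distr; ring.
Qed.

Lemma dipO5 om V b : weight om -> 1 <= b -> (forall k, V k <= Rpower (INR (fact k)) b) -> ~ SOb om V ->
  exists H, 0 < H /\ forall C, 0 < C -> exists j, C * H ^ j * exp (wv om 1 j) < Rpower (INR (fact j)) b.
Proof.
  intros Hw Hb HV HnS.
  apply not_all_ex_not in HnS. destruct HnS as [rho Hr].
  apply imply_to_and in Hr. destruct Hr as [Hr Hn].
  destruct (INR_archimed rho 1 Hr) as [L0 HL0]. set (L := S L0).
  assert (HL : (0 < L)%nat) by (unfold L; lia).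
  assert (HLR : 0 < INR L) by (apply lt_0_INR; auto).
  assert (HLr : / INR L <= rho).
  { apply Rmult_le_reg_l with (INR L); auto. rewrite Rinv_r by lra. unfold L. rewrite S_INR. nra. }
  set (P := Rpower (2 * INR L) b).
  assert (HP : 0 < P) by apply Rpower_pos.
  exists (/ P). split. apply Rinv_0_lt_compat; auto.
  intros C HC.
  apply not_ex_all_not with (n := (C * P) ^ L) in Hn. apply not_all_ex_not in Hn. destruct Hn as [k Hk].
  rewrite om_ineq in Hk. apply Rnot_le_lt in Hk.
  set (j := (k / L)%nat). destruct (div_bounds L k HL) as [Hj1 Hj2]. fold j in Hj1, Hj2.
  exists j.
  assert (W1 : INR L * wv om 1 j <= wv om rho k).
  { rewrite <- (wv_invL om L j HL). eapply Rle_trans.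
    apply (wv_mono_k om Hw (/ INR L) (L * j) k). apply Rinv_0_lt_compat; auto. exact Hj1.
    apply (wv_mono_rho om Hw rho (/ INR L) k). apply Rinv_0_lt_compat; auto. auto. }
  assert (W2 : (C * P) ^ L * exp (wv om 1 j) ^ L < V k).
  { eapply Rle_lt_trans; [|exact Hk]. apply Rmult_le_compat_l. apply pow_le. nra.
    rewrite <- exp_mulpow. apply exp_le; auto. }
  assert (W3 : V k <= (Rpower ((2 * INR L) ^ (S j) * INR (fact j)) b) ^ L).
  { eapply Rle_trans. apply HV. rewrite <- Rpower_pow_base.
    2: { apply Rmult_lt_0_compat. apply pow_lt; lra. apply fact_pos. }
    apply Rle_Rpower_l. lra. split. apply fact_pos.
    eapply Rle_trans. 2: apply (fact_block L j HL). apply fact_le_mono. lia. }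
  assert (W4 : C * P * exp (wv om 1 j) < Rpower ((2 * INR L) ^ (S j) * INR (fact j)) b).
  { apply (pow_lt_inv _ _ L). pose proof (exp_pos (wv om 1 j)). left; repeat apply Rmult_lt_0_compat; auto.
    left; apply Rpower_pos. rewrite (Rpow_mult_distr (C * P) (exp (wv om 1 j)) L). lra. }
  rewrite <- Rpower_mult_distr in W4. 2: apply pow_lt; lra. 2: apply fact_pos.
  rewrite Rpower_pow_base in W4 by lra. fold P in W4.
  simpl (P ^ S j) in W4.
  pose proof (pow_lt P j HP). pose proof (Rpower_pos (INR (fact j)) b).
  apply Rmult_lt_reg_l with (P * P ^ j). apply Rmult_lt_0_compat; auto.
  rewrite pow_inv.
  replace (P * P ^ j * (C * / P ^ j * exp (wv om 1 j))) with (C * P * exp (wv om 1 j)) by (field; repeat split; apply Rgt_not_eq; auto).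
  lra.
Qed.

Lemma caseO5 om : weight om -> (forall V, TP V -> (SGb V <-> SOb om V)) -> False.
Proof.
  intros Hw Heq.
  destruct (my_choice (fun j V => TP V /\ forall k, (/2)^(S k) * Rpower (INR (fact k)) (bet j) <= V k <= Rpower (INR (fact k)) (bet j))) as [VG HVG].
  { intros j. apply TP_G1. unfold bet. pose proof (Rinv_0_lt_compat _ (INRS_pos j)). lra. }
  assert (Hd : forall j, exists H, 0 < H /\ forall C, 0 < C -> exists k, C * H ^ k * exp (wv om 1 k) < Rpower (INR (fact k)) (bet j)).
  { intros j. apply (dipO5 om (VG j)); auto. unfold bet. pose proof (Rinv_0_lt_compat _ (INRS_pos j)). lra.
    apply HVG. intros HS. apply Heq in HS; [|apply HVG].
    revert HS. apply (notSGb_gen _ (bet j)). unfold bet. pose proof (Rinv_0_lt_compat _ (INRS_pos j)). lra.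
    apply HVG. }
  destruct (my_choice _ Hd) as [H HH].
  destruct (diag H (fun j k => exp (wv om 1 k))) as [W [HW [HWG HWd]]].
  - apply HH. - intros; apply exp_pos. - apply HH.
  - apply Heq in HWG; auto. destruct (HWG 1 ltac:(lra)) as [C HC].
    destruct (INR_archimed 1 C ltac:(lra)) as [j Hj]. rewrite Rmult_1_r in Hj.
    destruct (HWd j) as [k Hk]. specialize (HC k). apply om_ineq in HC.
    pose proof (exp_pos (wv om 1 k)). rewrite S_INR in Hk.
    assert (C * exp (wv om 1 k) <= (INR j + 1) * exp (wv om 1 k)) by (apply Rmult_le_compat_r; lra).
    lra.
Qed.

Lemma VGint n : exists V, TP V /\ (forall k, (/2)^(S k) * INR (fact k) ^ (S (S n)) <= V k) /\ SGr V.
Proof.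
  destruct (TP_G1 (INR (S (S n))) (pos_INR _)) as [V [HV HB]]. exists V. split; auto. split.
  - intros k. rewrite <- (Rpower_pow (S (S n)) (INR (fact k))) by apply fact_pos. apply HB.
  - apply (gev_int_SGr _ n). apply HB.
Qed.

Lemma half_fact k n : INR (fact k) ^ (S n) * (/2) ^ k <= 2 * ((/2)^(S k) * INR (fact k) ^ (S (S n))).
Proof.
  replace (2 * ((/2)^(S k) * INR (fact k) ^ (S (S n)))) with ((/2)^k * (INR (fact k) * INR (fact k) ^ (S n))) by (simpl; field).
  rewrite Rmult_comm. apply Rmult_le_compat_l. apply pow_le; lra.
  pose proof (fact_ge1 k). assert (0 <= INR (fact k) ^ S n) by (apply pow_le; lra). nra.
Qed.

Lemma caseO7 om : weight om -> (forall V, TP V -> (SGr V <-> SOb om V)) -> False.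
Proof.
  intros Hw Heq.
  destruct (my_choice (fun n V => TP V /\ (forall k, (/2)^(S k) * INR (fact k) ^ (S (S n)) <= V k) /\ SGr V)) as [VG HVG].
  { apply VGint. }
  assert (HO : forall n, SOb om (VG n)). { intros n. apply Heq; apply HVG. }
  destruct (my_choice (fun n C => forall k, VG n k <= C * exp (wv om (/ INR (S n)) k))) as [Cn HCn].
  { intros n. destruct (HO n (/ INR (S n))) as [C HC]. apply Rinv_0_lt_compat, INRS_pos.
    exists C. intros k. apply om_ineq. apply HC. }
  destruct (gdiag (fun _ => /2) (fun n => 2 * Rmax (Cn n) 1)) as [W [HW [HnG HZ]]].
  - intros; lra.
  - intros n. pose proof (Rmax_r (Cn n) 1). lra.
  - apply HnG. apply Heq; auto. intros rho Hr.
    destruct (INR_archimed rho 1 Hr) as [N0 HN0].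
    destruct (my_choice (fun n C => forall k, VG n k <= C * exp (wv om rho k))) as [Cr HCr].
    { intros n. destruct (HO n rho Hr) as [C HC]. exists C. intros k. apply om_ineq. apply HC. }
    destruct (fin_max Cr N0) as [B0 HB0].
    set (B := Rmax B0 1).
    exists B. intros k. apply om_ineq. apply (HZ (fun k => B * exp (wv om rho k))). intros n k'.
    pose proof (half_fact k' n) as HF. destruct (HVG n) as [_ [HV1 _]]. specialize (HV1 k').
    pose proof (Rmax_r (Cn n) 1) as R1. pose proof (Rmax_r B0 1) as R2. fold B in R2.
    pose proof (exp_pos (wv om rho k')).
    destruct (Compare_dec.le_lt_dec N0 n) as [Hn|Hn].
    + specialize (HCn n k').
      assert (E1 : exp (wv om (/ INR (S n)) k') <= exp (wv om rho k')).
      { apply exp_le. apply wv_mono_rho; auto. apply Rinv_0_lt_compat, INRS_pos.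
        apply Rmult_le_reg_l with (INR (S n)). apply INRS_pos. rewrite Rinv_r by (pose proof (INRS_pos n); lra).
        assert (INR N0 <= INR (S n)) by (apply le_INR; lia). nra. }
      pose proof (exp_pos (wv om (/ INR (S n)) k')).
      assert (VG n k' <= Rmax (Cn n) 1 * exp (wv om rho k')).
      { eapply Rle_trans. apply HCn. apply Rmult_le_compat. 
        destruct (Rle_dec 0 (Cn n)); auto. exfalso. 
        pose proof (TP_nonneg _ (proj1 (HVG n)) k'). 
        assert (Cn n * exp (wv om (/ INR (S n)) k') < 0) by nra. lra.
        lra. apply Rmax_l. auto. }
      assert (0 <= (B - 1) * (Rmax (Cn n) 1 * exp (wv om rho k'))) by (apply Rmult_le_pos; nra).
      assert (Rmax (Cn n) 1 * exp (wv om rho k') <= Rmax (Cn n) 1 * (B * exp (wv om rho k'))) by nra.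
      lra.
    + specialize (HCr n k'). specialize (HB0 n Hn).
      assert (Cr n * exp (wv om rho k') <= B * exp (wv om rho k')).
      { apply Rmult_le_compat_r. lra. eapply Rle_trans. apply HB0. apply Rmax_l. }
      assert (0 <= B * exp (wv om rho k')) by nra.
      assert (0 <= (Rmax (Cn n) 1 - 1) * (B * exp (wv om rho k'))) by (apply Rmult_le_pos; nra).
      assert (B * exp (wv om rho k') <= Rmax (Cn n) 1 * (B * exp (wv om rho k'))) by nra.
      lra.
Qed.

Ltac ppos := repeat first [apply Rmult_lt_0_compat | apply pow_lt | apply Rinv_0_lt_compat | apply fact_pos | apply exp_pos | lra].

Lemma starO om p rho C : weight om -> 0 < rho -> 0 < C ->
  (forall k, (/2)^(S k) * INR (fact k) ^ (S (S p)) <= C * exp (wv om rho k)) ->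
  exists c D, 0 < c /\ 0 < D /\ forall m, INR (fact m) ^ (S p) * c ^ m <= D * exp (wv om 1 m).
Proof.
  intros Hw Hr HC Hk.
  destruct (INR_archimed 1 rho ltac:(lra)) as [L0 HL0]. rewrite Rmult_1_r in HL0.
  set (L := S L0). assert (HL : (0 < L)%nat) by (unfold L; lia).
  assert (HLR : 0 < INR L) by (apply lt_0_INR; auto).
  assert (HrL : rho <= INR L) by (unfold L; rewrite S_INR; lra).
  set (u := 2 * INR L). assert (Hu : 0 < u) by (unfold u; lra).
  set (G := (2 * u ^ (S p)) ^ L).
  assert (HG : 1 <= G).
  { unfold G. apply pow_R1_Rle. assert (1 <= u ^ S p) by (apply pow_R1_Rle; unfold u, L; rewrite S_INR; pose proof (pos_INR L0); lra). lra. }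
  exists (/ G), (G * C ^ L). split. apply Rinv_0_lt_compat; lra. split. apply Rmult_lt_0_compat. lra. apply pow_lt; auto.
  intros m.
  set (a := fun k => (/2)^(S k) * INR (fact k) ^ (S (S p))).
  assert (Ha : forall k, 0 < a k) by (intros; unfold a; ppos).
  assert (A2 : forall k, a k ^ L <= C ^ L * exp (wv om 1 (L * k))).
  { intros k. specialize (Hk k).
    assert (wv om rho k <= / INR L * wv om 1 (L * k)).
    { rewrite <- (wv_L om L k HL). apply (wv_mono_rho om Hw); auto. }
    apply Rle_trans with ((C * exp (/ INR L * wv om 1 (L * k))) ^ L).
    apply pow_incr. split. left; apply Ha. eapply Rle_trans. apply Hk. apply Rmult_le_compat_l. lra. apply exp_le; auto.
    rewrite Rpow_mult_distr, <- exp_mulpow. right. f_equal. f_equal. field. lra. }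
  set (j := (m / L)%nat). destruct (div_bounds L m HL) as [Hj1 Hj2]. fold j in Hj1, Hj2.
  assert (A3 : exp (wv om 1 (L * j)) <= exp (wv om 1 m)).
  { apply exp_le. apply (wv_mono_k om Hw); auto. lra. }
  assert (A4 : INR (fact m) <= (u ^ (S j) * INR (fact j)) ^ L).
  { eapply Rle_trans. 2: apply (fact_block L j HL). apply fact_le_mono. lia. }
  set (f := INR (fact j)). assert (Hf : 1 <= f) by apply fact_ge1.
  assert (EQ : G ^ (S j) * a j ^ L = ((u ^ (S j) * f) ^ L) ^ (S p) * f ^ L).
  { apply ln_inv. unfold G, a; fold f; ppos. unfold G, a; fold f; ppos.
    unfold G, a. fold f.
    repeat (first [rewrite ln_mult by ppos | rewrite ln_pow by ppos]).
    rewrite ln_Rinv by lra.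
    rewrite (S_INR (S p)). ring. }
  assert (B1 : INR (fact m) ^ (S p) <= G ^ (S j) * a j ^ L).
  { rewrite EQ. apply Rle_trans with (((u ^ (S j) * f) ^ L) ^ (S p) * 1).
    rewrite Rmult_1_r. apply pow_incr. split. left; apply fact_pos. auto.
    apply Rmult_le_compat_l. apply pow_le. apply pow_le. apply Rmult_le_pos. apply pow_le; lra. lra.
    apply pow_R1_Rle; auto. }
  assert (B2 : G ^ (S j) <= G ^ (S m)). { apply Rle_pow; auto. lia. }
  pose proof (Ha j) as Haj. pose proof (pow_lt _ L Haj).
  assert (B3 : INR (fact m) ^ (S p) <= G ^ (S m) * a j ^ L).
  { eapply Rle_trans. apply B1. apply Rmult_le_compat_r; lra. }
  rewrite pow_inv.
  apply Rle_trans with (G ^ (S m) * a j ^ L * / G ^ m).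
  { apply Rmult_le_compat_r. left; ppos. auto. }
  replace (G ^ (S m) * a j ^ L * / G ^ m) with (G * a j ^ L) by (simpl; field; apply pow_nonzero; lra).
  rewrite Rmult_assoc. apply Rmult_le_compat_l. lra.
  eapply Rle_trans. apply A2. apply Rmult_le_compat_l. apply pow_le; lra. auto.
Qed.

Lemma caseO8 om : weight om -> (forall V, TP V -> (SGr V <-> SOr om V)) -> False.
Proof.
  intros Hw Heq.
  assert (Hs : forall n, exists cD, 0 < fst cD /\ 0 < snd cD /\ forall m, INR (fact m) ^ (S n) * fst cD ^ m <= snd cD * exp (wv om 1 m)).
  { intros n. destruct (VGint n) as [V [HV [HV1 HV2]]].
    apply Heq in HV2; auto. destruct HV2 as [rho [Hr [C HC]]].
    destruct (starO om n rho (Rmax C 1) Hw Hr) as [c [D [Hc [HD H]]]].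
    pose proof (Rmax_r C 1); lra.
    intros k. eapply Rle_trans. apply HV1. specialize (HC k). apply om_ineq in HC.
    eapply Rle_trans. apply HC. apply Rmult_le_compat_r. left; apply exp_pos. apply Rmax_l.
    exists (c, D). simpl. auto. }
  destruct (my_choice _ Hs) as [cD HcD].
  destruct (gdiag (fun n => fst (cD n)) (fun n => snd (cD n))) as [W [HW [HnG HZ]]].
  - apply HcD. - apply HcD.
  - apply HnG. apply Heq; auto. exists 1. split. lra. exists 1. intros k. apply om_ineq. rewrite Rmult_1_l.
    apply (HZ (fun k => exp (wv om 1 k))). apply HcD.
Qed.

Theorem theorem5p22 :
  (forall M : nat -> R, (forall k, 0 < M k) ->
     ~ same_space E_G_beur (E_beur M) /\ ~ same_space E_G_beur (E_roum M) /\
     ~ same_space E_G_roum (E_beur M) /\ ~ same_space E_G_roum (E_roum M)) /\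
  (forall om : R -> R, weight om ->
     ~ same_space E_G_beur (E_om_beur om) /\ ~ same_space E_G_beur (E_om_roum om) /\
     ~ same_space E_G_roum (E_om_beur om) /\ ~ same_space E_G_roum (E_om_roum om)).
Proof.
  split.
  - intros M HM. repeat split; intros Hs.
    + apply (caseM1 M HM). apply (transfer _ _ _ _ (fun V F HF => cls_Gb V F HF) (fun V F HF => cls_Mb V F HF M) Hs).
    + apply (caseM2 M HM). apply (transfer _ _ _ _ (fun V F HF => cls_Gb V F HF) (fun V F HF => cls_Mr V F HF M) Hs).
    + apply (caseM3 M HM). apply (transfer _ _ _ _ (fun V F HF => cls_Gr V F HF) (fun V F HF => cls_Mb V F HF M) Hs).
    + apply (caseM4 M HM). apply (transfer _ _ _ _ (fun V F HF => cls_Gr V F HF) (fun V F HF => cls_Mr V F HF M) Hs).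
  - intros om Hw. repeat split; intros Hs.
    + apply (caseO5 om Hw). apply (transfer _ _ _ _ (fun V F HF => cls_Gb V F HF) (fun V F HF => cls_Ob V F HF om) Hs).
    + apply (caseO6 om Hw). apply (transfer _ _ _ _ (fun V F HF => cls_Gb V F HF) (fun V F HF => cls_Or V F HF om) Hs).
    + apply (caseO7 om Hw). apply (transfer _ _ _ _ (fun V F HF => cls_Gr V F HF) (fun V F HF => cls_Ob V F HF om) Hs).
    + apply (caseO8 om Hw). apply (transfer _ _ _ _ (fun V F HF => cls_Gr V F HF) (fun V F HF => cls_Or V F HF om) Hs).
Qed.
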